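(* Let $f$ be a ternary cubic form with $f_{333}\neq0$, and set $g=\Delta_{333}f-f_{333}\Delta$. (1) $f$ is completely reducible (a product of three linear forms) if and only if $g_{113}=g_{123}=g_{223}=g_{133}=g_{233}=0$. (2) If moreover $4f_{113}f_{223}-f_{123}^2\neq0$, then $f$ is completely reducible if and only if $g_{113}=g_{123}=g_{223}=0$.
   Context: A ternary cubic form is written $f=\sum_{1\le i\le j\le k\le3}f_{ijk}x_ix_jx_k$ with complex coefficients, so $f_{ijk}$ is the coefficient of $x_ix_jx_k$; the same convention applies to $g_{ijk}$ and $\Delta_{ijk}$. $\Delta$ is the Hessian of $f$ normalized as $\Delta=\tfrac12\det(\partial^2f/\partial x_i\partial x_j)$; equivalently $\Delta=\tfrac1{12}J^2[f,f,f]$, where $J^2$ is the second transvectant. *)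

(* Defs.v *)
From HB Require Import structures.
From mathcomp Require Import all_boot all_order all_algebra.
From mathcomp Require Import complex.
From mathcomp Require reals.
Import reals.Real.Exports.
From mathcomp Require Import mpoly.
Set Implicit Arguments. Unset Strict Implicit. Unset Printing Implicit Defensive.
Import Order.TTheory GRing.Theory Num.Theory.
Local Open Scope ring_scope.

(* Ternary forms over a commutative ring K: elements of {mpoly K[3]};
   variables x_1, x_2, x_3 are 'X_0, 'X_1, 'X_2. *)

(* f_{ijk} : coefficient of x_i x_j x_k (indices i <= j <= k given as
   ordinals 0,1,2 standing for 1,2,3). *)
Definition cf3 {K : comRingType} (f : {mpoly K[3]}) (i j k : 'I_3) : K :=
  f@_(U_(i) + U_(j) + U_(k))%MM.

Definition hessmx {K : comRingType} (f : {mpoly K[3]}) : 'M[{mpoly K[3]}]_3 :=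
  \matrix_(i < 3, j < 3) mderiv i (mderiv j f).

Definition hessian {K : fieldType} (f : {mpoly K[3]}) : {mpoly K[3]} :=
  (2%:R^-1 : K) *: \det (hessmx f).

Definition completely_reducible {K : comRingType} (f : {mpoly K[3]}) : Prop :=
  exists l1 l2 l3 : {mpoly K[3]},
    [/\ l1 \is 1.-homog, l2 \is 1.-homog, l3 \is 1.-homog & f = l1 * l2 * l3].

Definition e1 : 'I_3 := @Ordinal 3 0 isT.
Definition e2 : 'I_3 := @Ordinal 3 1 isT.
Definition e3 : 'I_3 := @Ordinal 3 2 isT.

(* Main.v *)
Require Import Defs.
From HB Require Import structures.
From mathcomp Require Import all_boot all_order all_algebra.
From mathcomp Require Import complex.
From mathcomp Require reals.
Import reals.Real.Exports.
From mathcomp Require Import mpoly.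
From mathcomp Require Import ring.
Import GRing.Theory Num.Theory.
Set Implicit Arguments. Unset Strict Implicit. Unset Printing Implicit Defensive.
Local Open Scope ring_scope.
Section S1.
Variable K : numClosedFieldType.

Lemma nat_neq0 (n : nat) : (n > 0)%N -> (n%:R : K) != 0.
Proof. by rewrite pnatr_eq0 -lt0n. Qed.
Ltac fld := field; rewrite ?nat_neq0 //.

Lemma cubic_split (p r : K) : exists r1 r2 r3 : K,
  [/\ r1 + r2 + r3 = 0, r1 * r2 + r1 * r3 + r2 * r3 = p & r1 * r2 * r3 = r].
Proof.
have [r1 hr1] := @solve_monicpoly K 3 (nth 0 [:: r; -p; 0]) isT.
rewrite !big_ord_recl big_ord0 /bump /= in hr1.
set d := sqrtC (r1 ^+ 2 - 4%:R * (p + r1 ^+ 2)).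
have hd : d ^+ 2 = r1 ^+ 2 - 4%:R * (p + r1 ^+ 2) by rewrite sqrtCK.
have h2 : (2%:R : K) != 0 by rewrite nat_neq0.
exists r1, ((- r1 + d) / 2%:R), ((- r1 - d) / 2%:R); split.
- by fld.
- have -> : r1 * ((- r1 + d) / 2%:R) + r1 * ((- r1 - d) / 2%:R) +
     (- r1 + d) / 2%:R * ((- r1 - d) / 2%:R) = (- 4%:R * r1^+2 + r1 ^+ 2 - d ^+ 2) / 4%:R by field.
  by rewrite hd; field; rewrite ?nat_neq0.
- have -> : r1 * ((- r1 + d) / 2%:R) * ((- r1 - d) / 2%:R) = r1 * (r1 ^+ 2 - d ^+ 2) / 4%:R by field.
  rewrite hd.
  have -> : r1 * (r1 ^+ 2 - (r1 ^+ 2 - 4%:R * (p + r1 ^+ 2))) / 4%:R = r1 ^+ 3 + p * r1.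
    by field; rewrite ?nat_neq0.
  rewrite hr1; ring.
Qed.

Lemma cube_root (a : K) : exists u : K, u ^+ 3 = a.
Proof. by exists (3.-root a); rewrite rootCK. Qed.

Lemma omega_ex : exists w : K, w ^+ 2 + w + 1 = 0.
Proof.
have [w hw] := @solve_monicpoly K 2 (nth 0 [:: -1; -1]) isT.
rewrite !big_ord_recl big_ord0 /bump /= in hw.
exists w; rewrite hw; ring.
Qed.
End S1.

Section S2.
Variable K : numClosedFieldType.
Ltac fld := field; rewrite ?nat_neq0 //.

Definition BBx (q11 q12 q22 k0 k1 k2 k3 : K) := 3%:R*q22*k0 - q12*k1 + q11*k2.
Definition BBy (q11 q12 q22 k0 k1 k2 k3 : K) := q22*k1 - q12*k2 + 3%:R*q11*k3.
Definition Dq (q11 q12 q22 : K) := 4%:R*q11*q22 - q12^+2.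
Definition EE11 (q11 q12 q22 k0 k1 k2 k3 : K) :=
  4%:R*Dq q11 q12 q22*q11 - 36%:R*k0*k2 + 12%:R*k1^+2.
Definition EE12 (q11 q12 q22 k0 k1 k2 k3 : K) :=
  4%:R*Dq q11 q12 q22*q12 - 108%:R*k0*k3 + 12%:R*k1*k2.
Definition EE22 (q11 q12 q22 k0 k1 k2 k3 : K) :=
  4%:R*Dq q11 q12 q22*q22 - 36%:R*k1*k3 + 12%:R*k2^+2.

Definition nsol (q11 q12 q22 k0 k1 k2 k3 : K) : Prop :=
  exists u1 v1 u2 v2 u3 v3 : K,
  [/\ u1 + u2 + u3 = 0, v1 + v2 + v3 = 0, q11 = u1*u2 + u1*u3 + u2*u3,
      q12 = u1*v2 + v1*u2 + u1*v3 + v1*u3 + u2*v3 + v2*u3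
    & q22 = v1*v2 + v1*v3 + v2*v3] /\
  [/\ k0 = u1*u2*u3, k1 = u1*u2*v3 + u1*v2*u3 + v1*u2*u3,
      k2 = u1*v2*v3 + v1*u2*v3 + v1*v2*u3 & k3 = v1*v2*v3].

Lemma N_fwd q11 q12 q22 k0 k1 k2 k3 : nsol q11 q12 q22 k0 k1 k2 k3 ->
  [/\ BBx q11 q12 q22 k0 k1 k2 k3 = 0, BBy q11 q12 q22 k0 k1 k2 k3 = 0,
      EE11 q11 q12 q22 k0 k1 k2 k3 = 0, EE12 q11 q12 q22 k0 k1 k2 k3 = 0
    & EE22 q11 q12 q22 k0 k1 k2 k3 = 0].
Proof.
move=> [u1 [v1 [u2 [v2 [u3 [v3 [[hu hv -> -> ->] [-> -> -> ->]]]]]]]].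
have -> : u3 = - u1 - u2 by apply: (addrI (u1 + u2)); rewrite addrA hu; ring.
have -> : v3 = - v1 - v2 by apply: (addrI (v1 + v2)); rewrite addrA hv; ring.
by rewrite /BBx /BBy /EE11 /EE12 /EE22 /Dq; split; ring.
Qed.

(* transformations: X = s1 x + t1 y, Y = s2 x + t2 y *)
Definition tq11 (q11 q12 q22 s1 t1 s2 t2 : K) := q11*s1^+2 + q12*s1*s2 + q22*s2^+2.
Definition tq12 (q11 q12 q22 s1 t1 s2 t2 : K) :=
  2%:R*q11*s1*t1 + q12*s1*t2 + q12*s2*t1 + 2%:R*q22*s2*t2.
Definition tq22 (q11 q12 q22 s1 t1 s2 t2 : K) := q11*t1^+2 + q12*t1*t2 + q22*t2^+2.
Definition tk0 (k0 k1 k2 k3 s1 t1 s2 t2 : K) :=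
  k0*s1^+3 + k1*s1^+2*s2 + k2*s1*s2^+2 + k3*s2^+3.
Definition tk1 (k0 k1 k2 k3 s1 t1 s2 t2 : K) :=
  3%:R*k0*s1^+2*t1 + 2%:R*k1*s1*s2*t1 + k1*s1^+2*t2 + 2%:R*k2*s1*s2*t2 + k2*s2^+2*t1 + 3%:R*k3*s2^+2*t2.
Definition tk2 (k0 k1 k2 k3 s1 t1 s2 t2 : K) :=
  3%:R*k0*s1*t1^+2 + 2%:R*k1*s1*t1*t2 + k1*s2*t1^+2 + k2*s1*t2^+2 + 2%:R*k2*s2*t1*t2 + 3%:R*k3*s2*t2^+2.
Definition tk3 (k0 k1 k2 k3 s1 t1 s2 t2 : K) :=
  k0*t1^+3 + k1*t1^+2*t2 + k2*t1*t2^+2 + k3*t2^+3.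
Definition tlx (u v s1 t1 s2 t2 : K) := u*s1 + v*s2.
Definition tly (u v s1 t1 s2 t2 : K) := u*t1 + v*t2.

Lemma nsol_t q11 q12 q22 k0 k1 k2 k3 s1 t1 s2 t2 :
  nsol q11 q12 q22 k0 k1 k2 k3 ->
  nsol (tq11 q11 q12 q22 s1 t1 s2 t2) (tq12 q11 q12 q22 s1 t1 s2 t2) (tq22 q11 q12 q22 s1 t1 s2 t2)
       (tk0 k0 k1 k2 k3 s1 t1 s2 t2) (tk1 k0 k1 k2 k3 s1 t1 s2 t2)
       (tk2 k0 k1 k2 k3 s1 t1 s2 t2) (tk3 k0 k1 k2 k3 s1 t1 s2 t2).
Proof.
move=> [u1 [v1 [u2 [v2 [u3 [v3 [[hu hv -> -> ->] [-> -> -> ->]]]]]]]].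
have -> : u3 = - u1 - u2 by apply: (addrI (u1 + u2)); rewrite addrA hu; ring.
have -> : v3 = - v1 - v2 by apply: (addrI (v1 + v2)); rewrite addrA hv; ring.
exists (u1*s1 + v1*s2), (u1*t1 + v1*t2), (u2*s1 + v2*s2), (u2*t1 + v2*t2),
  ((- u1 - u2)*s1 + (- v1 - v2)*s2), ((- u1 - u2)*t1 + (- v1 - v2)*t2).
rewrite /tq11 /tq12 /tq22 /tk0 /tk1 /tk2 /tk3.
by split; split; ring.
Qed.

Lemma covB q11 q12 q22 k0 k1 k2 k3 s1 t1 s2 t2 :
  let Q11 := tq11 q11 q12 q22 s1 t1 s2 t2 in
  let Q12 := tq12 q11 q12 q22 s1 t1 s2 t2 in
  let Q22 := tq22 q11 q12 q22 s1 t1 s2 t2 in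
  let K0 := tk0 k0 k1 k2 k3 s1 t1 s2 t2 in
  let K1 := tk1 k0 k1 k2 k3 s1 t1 s2 t2 in
  let K2 := tk2 k0 k1 k2 k3 s1 t1 s2 t2 in
  let K3 := tk3 k0 k1 k2 k3 s1 t1 s2 t2 in
  let d := s1 * t2 - s2 * t1 in
  let bx := BBx q11 q12 q22 k0 k1 k2 k3 in
  let by' := BBy q11 q12 q22 k0 k1 k2 k3 in
  [/\ BBx Q11 Q12 Q22 K0 K1 K2 K3 = d^+2 * tlx bx by' s1 t1 s2 t2,
      BBy Q11 Q12 Q22 K0 K1 K2 K3 = d^+2 * tly bx by' s1 t1 s2 t2,
      EE11 Q11 Q12 Q22 K0 K1 K2 K3 = d^+2 * tq11 (EE11 q11 q12 q22 k0 k1 k2 k3)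
         (EE12 q11 q12 q22 k0 k1 k2 k3) (EE22 q11 q12 q22 k0 k1 k2 k3) s1 t1 s2 t2,
      EE12 Q11 Q12 Q22 K0 K1 K2 K3 = d^+2 * tq12 (EE11 q11 q12 q22 k0 k1 k2 k3)
         (EE12 q11 q12 q22 k0 k1 k2 k3) (EE22 q11 q12 q22 k0 k1 k2 k3) s1 t1 s2 t2
    & EE22 Q11 Q12 Q22 K0 K1 K2 K3 = d^+2 * tq22 (EE11 q11 q12 q22 k0 k1 k2 k3)
         (EE12 q11 q12 q22 k0 k1 k2 k3) (EE22 q11 q12 q22 k0 k1 k2 k3) s1 t1 s2 t2].
Proof.
rewrite /BBx /BBy /EE11 /EE12 /EE22 /Dq /tq11 /tq12 /tq22 /tk0 /tk1 /tk2 /tk3 /tlx /tly /=.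
by split; ring.
Qed.
End S2.

Section S3.
Variable K : numClosedFieldType.
Ltac fld := field; rewrite ?nat_neq0 //.

Lemma sq0 (x : K) : x ^+ 2 = 0 -> x = 0.
Proof. by move/eqP; rewrite expf_eq0 => /andP[_ /eqP]. Qed.

Lemma tk_inv (k0 k1 k2 k3 s1 t1 s2 t2 : K) : s1*t2 - s2*t1 != 0 ->
  let d := s1*t2 - s2*t1 in
  let a := t2/d in let b := -t1/d in let c := -s2/d in let e := s1/d in
  let K0 := tk0 k0 k1 k2 k3 a b c e in let K1 := tk1 k0 k1 k2 k3 a b c e in
  let K2 := tk2 k0 k1 k2 k3 a b c e in let K3 := tk3 k0 k1 k2 k3 a b c e in
  [/\ k0 = tk0 K0 K1 K2 K3 s1 t1 s2 t2, k1 = tk1 K0 K1 K2 K3 s1 t1 s2 t2,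
      k2 = tk2 K0 K1 K2 K3 s1 t1 s2 t2 & k3 = tk3 K0 K1 K2 K3 s1 t1 s2 t2].
Proof.
move=> hd /=; rewrite /tk0 /tk1 /tk2 /tk3; split; by fld.
Qed.

Lemma tq_inv (q11 q12 q22 s1 t1 s2 t2 : K) : s1*t2 - s2*t1 != 0 ->
  let d := s1*t2 - s2*t1 in
  let a := t2/d in let b := -t1/d in let c := -s2/d in let e := s1/d in
  let Q11 := tq11 q11 q12 q22 s1 t1 s2 t2 in let Q12 := tq12 q11 q12 q22 s1 t1 s2 t2 in
  let Q22 := tq22 q11 q12 q22 s1 t1 s2 t2 in
  [/\ q11 = tq11 Q11 Q12 Q22 a b c e, q12 = tq12 Q11 Q12 Q22 a b c e
    & q22 = tq22 Q11 Q12 Q22 a b c e].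
Proof.
move=> hd /=; rewrite /tq11 /tq12 /tq22; split; by fld.
Qed.

Lemma tl_inj (u v s1 t1 s2 t2 : K) : s1*t2 - s2*t1 != 0 ->
  tlx u v s1 t1 s2 t2 = 0 -> tly u v s1 t1 s2 t2 = 0 -> u = 0 /\ v = 0.
Proof.
rewrite /tlx /tly => hd h1 h2.
split.
  have -> : u = (t2 * (u*s1 + v*s2) - s2 * (u*t1 + v*t2)) / (s1*t2 - s2*t1) by fld.
  by rewrite h1 h2 !mulr0 subrr mul0r.
have -> : v = (s1 * (u*t1 + v*t2) - t1 * (u*s1 + v*s2)) / (s1*t2 - s2*t1) by fld.
by rewrite h1 h2 !mulr0 subrr mul0r.
Qed.

Lemma tq_inj (q11 q12 q22 s1 t1 s2 t2 : K) : s1*t2 - s2*t1 != 0 ->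
  tq11 q11 q12 q22 s1 t1 s2 t2 = 0 -> tq12 q11 q12 q22 s1 t1 s2 t2 = 0 ->
  tq22 q11 q12 q22 s1 t1 s2 t2 = 0 -> [/\ q11 = 0, q12 = 0 & q22 = 0].
Proof.
move=> hd h1 h2 h3; have [e1 e2 e3] := tq_inv q11 q12 q22 hd.
rewrite /= h1 h2 h3 /tq11 /tq12 /tq22 in e1 e2 e3.
by rewrite e1 e2 e3; split; ring.
Qed.

Lemma tl_inv (u v s1 t1 s2 t2 : K) : s1*t2 - s2*t1 != 0 ->
  let d := s1*t2 - s2*t1 in
  let a := t2/d in let b := -t1/d in let c := -s2/d in let e := s1/d in
  u = tlx (tlx u v a b c e) (tly u v a b c e) s1 t1 s2 t2 /\
  v = tly (tlx u v a b c e) (tly u v a b c e) s1 t1 s2 t2.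
Proof. move=> hd /=; rewrite /tlx /tly; split; by fld. Qed.

Lemma fact_nondeg (q11 q12 q22 : K) : Dq q11 q12 q22 != 0 ->
  exists s1 t1 s2 t2 : K, [/\ s1*t2 - s2*t1 != 0, q11 = tq11 0 1 0 s1 t1 s2 t2,
     q12 = tq12 0 1 0 s1 t1 s2 t2 & q22 = tq22 0 1 0 s1 t1 s2 t2].
Proof.
rewrite /Dq /tq11 /tq12 /tq22 => hD.
have h2 : (2%:R : K) != 0 by rewrite nat_neq0.
case: (eqVneq q11 0) => h11.
  have h12 : q12 != 0.
    apply: contraNneq hD => ->; rewrite h11; apply/eqP; ring.
  exists 0, 1, q12, q22; split.
  - by rewrite mul0r sub0r mulr1 oppr_eq0.
  - by rewrite h11; ring.
  - ring.
  - ring.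
set r := sqrtC (q12 ^+ 2 - 4%:R * q11 * q22).
have hr : r ^+ 2 = q12 ^+ 2 - 4%:R * q11 * q22 by rewrite sqrtCK.
have hr0 : r != 0.
  apply: contraNneq hD => r0; apply/eqP.
  have : r ^+ 2 = 0 by rewrite r0; ring.
  rewrite hr => /eqP; rewrite subr_eq0 => /eqP ->; ring.
exists q11, ((q12 + r) / 2%:R), 1, ((q12 - r) / (2%:R * q11)); split.
- have -> : q11 * ((q12 - r) / (2%:R * q11)) - 1 * ((q12 + r) / 2%:R) = - r by fld.
  by rewrite oppr_eq0.
- ring.
- by fld.
- have -> : 0 * ((q12 + r) / 2%:R) ^+ 2 + 1 * ((q12 + r) / 2%:R) * ((q12 - r) / (2%:R * q11)) +
     0 * ((q12 - r) / (2%:R * q11)) ^+ 2 = (q12^+2 - r^+2) / (4%:R * q11) by fld.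
  by rewrite hr; fld.
Qed.

Lemma fact_deg (q11 q12 q22 : K) : Dq q11 q12 q22 = 0 ->
  ~~ [&& q11 == 0, q12 == 0 & q22 == 0] ->
  exists s1 t1 s2 t2 : K, [/\ s1*t2 - s2*t1 != 0, q11 = tq11 1 0 0 s1 t1 s2 t2,
     q12 = tq12 1 0 0 s1 t1 s2 t2 & q22 = tq22 1 0 0 s1 t1 s2 t2].
Proof.
rewrite /Dq /tq11 /tq12 /tq22 => hD hq.
have h2 : (2%:R : K) != 0 by rewrite nat_neq0.
case: (eqVneq q11 0) => h11.
  have h12 : q12 = 0.
    apply: sq0; have e : q12 ^+ 2 = - (4%:R * q11 * q22 - q12 ^+ 2) + 4%:R * q11 * q22 by ring.
    by rewrite hD h11 in e; rewrite e; ring.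
  have h22 : q22 != 0 by move: hq; rewrite h11 h12 !eqxx.
  set t := sqrtC q22.
  have ht : t ^+ 2 = q22 by rewrite sqrtCK.
  have ht0 : t != 0 by apply: contraNneq h22 => t0; rewrite -ht t0; apply/eqP; ring.
  exists 0, t, 1, 0; split.
  - by rewrite mul0r sub0r mul1r oppr_eq0.
  - by rewrite h11; ring.
  - by rewrite h12; ring.
  - by rewrite -ht; ring.
set s := sqrtC q11.
have hs : s ^+ 2 = q11 by rewrite sqrtCK.
have hs0 : s != 0 by apply: contraNneq h11 => s0; rewrite -hs s0; apply/eqP; ring.
exists s, (q12 / (2%:R * s)), 0, 1; split.
- by rewrite mulr1 mul0r subr0.
- by rewrite hs; ring.
- by fld.
- have -> : 1 * (q12 / (2%:R * s)) ^+ 2 + 0 * (q12 / (2%:R * s)) * 1 + 0 * 1 ^+ 2 =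
     q12 ^+ 2 / (4%:R * s ^+ 2) by fld.
  have e : q12 ^+ 2 = 4%:R * q11 * q22 - (4%:R * q11 * q22 - q12 ^+ 2) by ring.
  rewrite hD subr0 in e; rewrite e.
  by rewrite hs; fld.
Qed.
End S3.

Section S4.
Variable K : numClosedFieldType.
Ltac fld := field; rewrite ?nat_neq0 //.

Lemma sol_xy (k0 k3 : K) : 27%:R * k0 * k3 = -1 -> nsol 0 1 0 k0 0 0 k3.
Proof.
move=> h.
have k0n : k0 != 0.
  apply/eqP => k00; move: h; rewrite k00 mulr0 mul0r => /eqP.
  by rewrite eq_sym oppr_eq0 oner_eq0.
have [u hu] := cube_root k0.
have un : u != 0 by apply: contraNneq k0n => u0; rewrite -hu u0 expr0n.
have [w hw] := omega_ex K.
pose v := - (3%:R * u)^-1.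
have hk3 : k3 = (27%:R * k0 * k3) / (27%:R * k0) by fld.
rewrite h in hk3.
exists u, v, (w*u), ((-1-w)*v), ((-1-w)*u), (w*v); split; split.
- ring.
- ring.
- rewrite [RHS](_ : _ = -(u^+2) * (w^+2 + w + 1)); [by rewrite hw; ring | ring].
- rewrite [RHS](_ : _ = u*v*(2%:R*(w^+2 + w + 1) - 3%:R)); [by rewrite hw /v; fld | ring].
- rewrite [RHS](_ : _ = -(v^+2) * (w^+2 + w + 1)); [by rewrite hw; ring | ring].
- rewrite [RHS](_ : _ = u^+3 - u^+3 * (w^+2 + w + 1)); [by rewrite hw hu; ring | ring].
- rewrite [RHS](_ : _ = u^+2 * v * (w^+2 + w + 1)); [by rewrite hw; ring | ring].
- rewrite [RHS](_ : _ = u * v^+2 * (w^+2 + w + 1)); [by rewrite hw; ring | ring].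
- rewrite [RHS](_ : _ = v^+3 - v^+3 * (w^+2 + w + 1)); [rewrite hw hk3 /v -hu | ring].
  by fld.
Qed.

Lemma sol_x2 (k0 : K) : nsol 1 0 0 k0 0 0 0.
Proof.
have [r1 [r2 [r3 [h1 h2 h3]]]] := cubic_split 1 k0.
exists r1, 0, r2, 0, r3, 0; split; split => //; try ring.
Qed.

Lemma sol_q0 (k0 k1 k2 k3 : K) : k1^+2 = 3%:R*k0*k2 -> k1*k2 = 9%:R*k0*k3 ->
  k2^+2 = 3%:R*k1*k3 -> nsol 0 0 0 k0 k1 k2 k3.
Proof.
move=> e1 e2 e3.
case: (eqVneq k0 0) => hk0.
  have hk1 : k1 = 0 by apply: sq0; rewrite e1 hk0; ring.
  have hk2 : k2 = 0 by apply: sq0; rewrite e3 hk1; ring.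
  have [r1 [r2 [r3 [h1 h2 h3]]]] := cubic_split 0 k3.
  exists 0, r1, 0, r2, 0, r3; rewrite hk0 hk1 hk2; split; split => //; try ring.
have [r1 [r2 [r3 [h1 h2 h3]]]] := cubic_split 0 k0.
pose t := k1 / (3%:R * k0).
exists r1, (r1*t), r2, (r2*t), r3, (r3*t); split; split.
- exact: h1.
- by rewrite [LHS](_ : _ = t * (r1 + r2 + r3)); [rewrite h1; ring | ring].
- by rewrite h2.
- by rewrite [RHS](_ : _ = 2%:R * t * (r1 * r2 + r1 * r3 + r2 * r3)); [rewrite h2; ring | ring].
- by rewrite [RHS](_ : _ = t^+2 * (r1 * r2 + r1 * r3 + r2 * r3)); [rewrite h2; ring | ring].
- by rewrite h3.
- rewrite [RHS](_ : _ = 3%:R * t * (r1 * r2 * r3)); [rewrite h3 /t | ring].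
  by fld.
- rewrite [RHS](_ : _ = 3%:R * t^+2 * (r1 * r2 * r3)); [rewrite h3 /t | ring].
  rewrite [RHS](_ : _ = k1^+2 / (3%:R * k0)); [rewrite e1 | ]; by fld.
- rewrite [RHS](_ : _ = t^+3 * (r1 * r2 * r3)); [rewrite h3 /t | ring].
  have e : k1^+3 = 27%:R * k0^+2 * k3.
    have -> : k1^+3 = k1 * k1^+2 by ring.
    rewrite e1; have -> : k1 * (3%:R * k0 * k2) = 3%:R * k0 * (k1 * k2) by ring.
    by rewrite e2; ring.
  rewrite [RHS](_ : _ = k1^+3 / (27%:R * k0^+2)); [rewrite e | ]; by fld.
Qed.
End S4.

Section S5.
Variable K : numClosedFieldType.
Ltac fld := field; rewrite ?nat_neq0 //.

Lemma lin0 (c x : K) : c != 0 -> c * x = 0 -> x = 0.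
Proof. by move=> hc /eqP; rewrite mulf_eq0 (negbTE hc) => /eqP. Qed.

Lemma use0 (x y : K) : y = 0 -> x = y -> x = 0.
Proof. by move=> -> . Qed.

Lemma pushforward (q11 q12 q22 k0 k1 k2 k3 s1 t1 s2 t2 : K) : s1*t2 - s2*t1 != 0 ->
  let d := s1*t2 - s2*t1 in
  let a := t2/d in let b := -t1/d in let c := -s2/d in let e := s1/d in
  nsol q11 q12 q22 (tk0 k0 k1 k2 k3 a b c e) (tk1 k0 k1 k2 k3 a b c e)
    (tk2 k0 k1 k2 k3 a b c e) (tk3 k0 k1 k2 k3 a b c e) ->
  nsol (tq11 q11 q12 q22 s1 t1 s2 t2) (tq12 q11 q12 q22 s1 t1 s2 t2)
    (tq22 q11 q12 q22 s1 t1 s2 t2) k0 k1 k2 k3.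
Proof.
move=> hd /= hs.
have := nsol_t s1 t1 s2 t2 hs.
have [f0 f1 f2 f3] := tk_inv k0 k1 k2 k3 hd.
by rewrite /= -f0 -f1 -f2 -f3.
Qed.

Lemma pullback (q11 q12 q22 k0 k1 k2 k3 s1 t1 s2 t2 : K) : s1*t2 - s2*t1 != 0 ->
  let d := s1*t2 - s2*t1 in
  let a := t2/d in let b := -t1/d in let c := -s2/d in let e := s1/d in
  let Q11 := tq11 q11 q12 q22 s1 t1 s2 t2 in let Q12 := tq12 q11 q12 q22 s1 t1 s2 t2 in
  let Q22 := tq22 q11 q12 q22 s1 t1 s2 t2 in
  let K0 := tk0 k0 k1 k2 k3 a b c e in let K1 := tk1 k0 k1 k2 k3 a b c e in
  let K2 := tk2 k0 k1 k2 k3 a b c e in let K3 := tk3 k0 k1 k2 k3 a b c e in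
  BBx Q11 Q12 Q22 k0 k1 k2 k3 = 0 -> BBy Q11 Q12 Q22 k0 k1 k2 k3 = 0 ->
  EE11 Q11 Q12 Q22 k0 k1 k2 k3 = 0 -> EE12 Q11 Q12 Q22 k0 k1 k2 k3 = 0 ->
  EE22 Q11 Q12 Q22 k0 k1 k2 k3 = 0 ->
  [/\ BBx q11 q12 q22 K0 K1 K2 K3 = 0, BBy q11 q12 q22 K0 K1 K2 K3 = 0,
      EE11 q11 q12 q22 K0 K1 K2 K3 = 0, EE12 q11 q12 q22 K0 K1 K2 K3 = 0
    & EE22 q11 q12 q22 K0 K1 K2 K3 = 0].
Proof.
move=> hd /= hbx hby h11 h12 h22.
have [f0 f1 f2 f3] := tk_inv k0 k1 k2 k3 hd.
have [c1 c2 c3 c4 c5] := covB q11 q12 q22 (tk0 k0 k1 k2 k3 (t2 / (s1 * t2 - s2 * t1)) (- t1 / (s1 * t2 - s2 * t1))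
     (- s2 / (s1 * t2 - s2 * t1)) (s1 / (s1 * t2 - s2 * t1)))
  (tk1 k0 k1 k2 k3 (t2 / (s1 * t2 - s2 * t1)) (- t1 / (s1 * t2 - s2 * t1))
     (- s2 / (s1 * t2 - s2 * t1)) (s1 / (s1 * t2 - s2 * t1)))
  (tk2 k0 k1 k2 k3 (t2 / (s1 * t2 - s2 * t1)) (- t1 / (s1 * t2 - s2 * t1))
     (- s2 / (s1 * t2 - s2 * t1)) (s1 / (s1 * t2 - s2 * t1)))
  (tk3 k0 k1 k2 k3 (t2 / (s1 * t2 - s2 * t1)) (- t1 / (s1 * t2 - s2 * t1))
     (- s2 / (s1 * t2 - s2 * t1)) (s1 / (s1 * t2 - s2 * t1))) s1 t1 s2 t2.
rewrite /= -f0 -f1 -f2 -f3 in c1 c2 c3 c4 c5.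
have hd2 : (s1 * t2 - s2 * t1) ^+ 2 != 0 by rewrite expf_neq0.
move: c1 c2; rewrite hbx hby => /esym/(lin0 hd2) c1 /esym/(lin0 hd2) c2.
have [b1 b2] := tl_inj hd c1 c2.
move: c3 c4 c5; rewrite h11 h12 h22 => /esym/(lin0 hd2) c3 /esym/(lin0 hd2) c4 /esym/(lin0 hd2) c5.
have [e1 e2 e3] := tq_inj hd c3 c4 c5.
by split.
Qed.

Lemma N_bwd (q11 q12 q22 k0 k1 k2 k3 : K) :
  BBx q11 q12 q22 k0 k1 k2 k3 = 0 -> BBy q11 q12 q22 k0 k1 k2 k3 = 0 ->
  EE11 q11 q12 q22 k0 k1 k2 k3 = 0 -> EE12 q11 q12 q22 k0 k1 k2 k3 = 0 ->
  EE22 q11 q12 q22 k0 k1 k2 k3 = 0 -> nsol q11 q12 q22 k0 k1 k2 k3.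
Proof.
move=> hbx hby h11 h12 h22.
have n12 : (12%:R : K) != 0 by rewrite nat_neq0.
have n3 : (3%:R : K) != 0 by rewrite nat_neq0.
case: (eqVneq (Dq q11 q12 q22) 0) => hD.
  case: (boolP [&& q11 == 0, q12 == 0 & q22 == 0]) => hq.
    move/and3P: hq => [/eqP e1 /eqP e2 /eqP e3]; subst.
    apply: sol_q0.
    - apply/eqP; rewrite -subr_eq0; apply/eqP; apply: (lin0 n12).
      by apply: (use0 h11); rewrite /EE11 /Dq; ring.
    - apply/eqP; rewrite -subr_eq0; apply/eqP; apply: (lin0 n12).
      by apply: (use0 h12); rewrite /EE12 /Dq; ring.
    - apply/eqP; rewrite -subr_eq0; apply/eqP; apply: (lin0 n12).
      by apply: (use0 h22); rewrite /EE22 /Dq; ring.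
  have [s1 [t1 [s2 [t2 [hd e1 e2 e3]]]]] := fact_deg hD hq.
  rewrite e1 e2 e3 in hbx hby h11 h12 h22 *.
  apply: pushforward => //.
  have [b1 b2 f1 f2 f3] := pullback hd hbx hby h11 h12 h22.
  move: b1 b2 f1 f2 f3; rewrite /=.
  set K0 := tk0 _ _ _ _ _ _ _ _; set K1 := tk1 _ _ _ _ _ _ _ _;
  set K2 := tk2 _ _ _ _ _ _ _ _; set K3 := tk3 _ _ _ _ _ _ _ _.
  move=> b1 b2 f1 f2 f3.
  have z2 : K2 = BBx 1 0 0 K0 K1 K2 K3 by rewrite /BBx; ring.
  rewrite b1 in z2.
  have z3 : K3 = 0 by apply: (lin0 n3); apply: (use0 b2); rewrite /BBy; ring.
  have z1 : K1 = 0 by apply: sq0; apply: (lin0 n12); apply: (use0 f1); rewrite /EE11 /Dq z2; ring.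
  by rewrite z1 z2 z3; apply: sol_x2.
have [s1 [t1 [s2 [t2 [hd e1 e2 e3]]]]] := fact_nondeg hD.
rewrite e1 e2 e3 in hbx hby h11 h12 h22 *.
apply: pushforward => //.
have [b1 b2 f1 f2 f3] := pullback hd hbx hby h11 h12 h22.
move: b1 b2 f1 f2 f3; rewrite /=.
set K0 := tk0 _ _ _ _ _ _ _ _; set K1 := tk1 _ _ _ _ _ _ _ _;
set K2 := tk2 _ _ _ _ _ _ _ _; set K3 := tk3 _ _ _ _ _ _ _ _.
move=> b1 b2 f1 f2 f3.
have z1 : K1 = - BBx 0 1 0 K0 K1 K2 K3 by rewrite /BBx; ring.
rewrite b1 oppr0 in z1.
have z2 : K2 = - BBy 0 1 0 K0 K1 K2 K3 by rewrite /BBy; ring.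
rewrite b2 oppr0 in z2.
rewrite z1 z2; apply: sol_xy.
have n4 : (-4%:R : K) != 0 by rewrite oppr_eq0 nat_neq0.
apply/eqP; rewrite -subr_eq0; apply/eqP; apply: (lin0 n4).
by apply: (use0 f2); rewrite /EE12 /Dq z1 z2; ring.
Qed.
End S5.

Section S6.
Variable K : numClosedFieldType.
Ltac fld := field; rewrite ?nat_neq0 //.

Definition FF11 (q11 q12 q22 k0 k1 k2 k3 al be : K) :=
  EE11 q11 q12 q22 k0 k1 k2 k3 - 24%:R * al * BBx q11 q12 q22 k0 k1 k2 k3.
Definition FF12 (q11 q12 q22 k0 k1 k2 k3 al be : K) :=
  EE12 q11 q12 q22 k0 k1 k2 k3 - 24%:R * (be * BBx q11 q12 q22 k0 k1 k2 k3 + al * BBy q11 q12 q22 k0 k1 k2 k3).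
Definition FF22 (q11 q12 q22 k0 k1 k2 k3 al be : K) :=
  EE22 q11 q12 q22 k0 k1 k2 k3 - 24%:R * be * BBy q11 q12 q22 k0 k1 k2 k3.
Definition DL (q11 q12 q22 al be : K) :=
  4%:R * (q11 + 3%:R * al^+2) * (q22 + 3%:R * be^+2) - (q12 + 6%:R * al * be)^+2.

Lemma N2_xy (K0 K1 K2 K3 al be : K) :
  FF11 0 1 0 K0 K1 K2 K3 al be = 0 -> FF12 0 1 0 K0 K1 K2 K3 al be = 0 ->
  FF22 0 1 0 K0 K1 K2 K3 al be = 0 -> DL 0 1 0 al be != 0 -> K1 = 0 /\ K2 = 0.
Proof.
move=> h11 h12 h22 hDL.
have hD : 1 + 12%:R * al * be != 0.
  apply: contraNneq hDL => e; apply/eqP.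
  by rewrite (_ : DL 0 1 0 al be = -(1 + 12%:R * al * be)); [rewrite e oppr0 | rewrite /DL; ring].
have n4 : (4%:R : K) != 0 by rewrite nat_neq0.
have n48 : (48%:R : K) != 0 by rewrite nat_neq0.
have e : 48%:R * (K1 * K2 * (1 + 12%:R * al * be)) =
  - 12%:R * K1 * K2 * FF12 0 1 0 K0 K1 K2 K3 al be
  + FF11 0 1 0 K0 K1 K2 K3 al be * FF22 0 1 0 K0 K1 K2 K3 al be
  + 36%:R * FF11 0 1 0 K0 K1 K2 K3 al be * K1 * K3
  + 36%:R * FF22 0 1 0 K0 K1 K2 K3 al be * K0 * K2.
  by rewrite /FF11 /FF12 /FF22 /EE11 /EE12 /EE22 /BBx /BBy /Dq; ring.
rewrite h11 h12 h22 in e.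
have : K1 * K2 * (1 + 12%:R * al * be) = 0 by apply: (lin0 n48); rewrite e; ring.
move/eqP; rewrite !mulf_eq0 (negbTE hD) orbF => /orP [] /eqP z.
- split => //.
  have e2 : 4%:R * (K2 * (1 + 12%:R * al * be)) =
    3%:R * K3 * FF11 0 1 0 K0 K1 K2 K3 al be + 2%:R * al * FF22 0 1 0 K0 K1 K2 K3 al be
    - K2 * FF12 0 1 0 K0 K1 K2 K3 al be.
    by rewrite /FF11 /FF12 /FF22 /EE11 /EE12 /EE22 /BBx /BBy /Dq z; ring.
  rewrite h11 h12 h22 in e2.
  have : K2 * (1 + 12%:R * al * be) = 0 by apply: (lin0 n4); rewrite e2; ring.
  by move/eqP; rewrite mulf_eq0 (negbTE hD) orbF => /eqP.
- split => //.
  have e2 : 4%:R * (K1 * (1 + 12%:R * al * be)) =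
    3%:R * K0 * FF22 0 1 0 K0 K1 K2 K3 al be + 2%:R * be * FF11 0 1 0 K0 K1 K2 K3 al be
    - K1 * FF12 0 1 0 K0 K1 K2 K3 al be.
    by rewrite /FF11 /FF12 /FF22 /EE11 /EE12 /EE22 /BBx /BBy /Dq z; ring.
  rewrite h11 h12 h22 in e2.
  have : K1 * (1 + 12%:R * al * be) = 0 by apply: (lin0 n4); rewrite e2; ring.
  by move/eqP; rewrite mulf_eq0 (negbTE hD) orbF => /eqP.
Qed.

Lemma N2_x2 (K0 K1 K2 K3 al be : K) :
  FF11 1 0 0 K0 K1 K2 K3 al be = 0 -> FF12 1 0 0 K0 K1 K2 K3 al be = 0 ->
  FF22 1 0 0 K0 K1 K2 K3 al be = 0 -> DL 1 0 0 al be != 0 -> K2 = 0 /\ K3 = 0.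
Proof.
move=> h11 h12 h22 hDL.
have hb : be != 0 by apply: contraNneq hDL => ->; apply/eqP; rewrite /DL; ring.
have n144 : (144%:R : K) != 0 by rewrite nat_neq0.
have n12 : (12%:R : K) != 0 by rewrite nat_neq0.
have e : 144%:R * (be ^+ 2 * K3) =
  K1 * FF22 1 0 0 K0 K1 K2 K3 al be - 2%:R * be * FF22 1 0 0 K0 K1 K2 K3 al be
  - K2 * FF12 1 0 0 K0 K1 K2 K3 al be + 3%:R * K3 * FF11 1 0 0 K0 K1 K2 K3 al be.
  by rewrite /FF11 /FF12 /FF22 /EE11 /EE12 /EE22 /BBx /BBy /Dq; ring.
rewrite h11 h12 h22 in e.
have z3 : K3 = 0.
  have : be ^+ 2 * K3 = 0 by apply: (lin0 n144); rewrite e; ring.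
  by move/eqP; rewrite mulf_eq0 expf_eq0 (negbTE hb) andbF /= => /eqP.
split => //; apply: sq0; apply: (lin0 n12); apply: (use0 h22).
by rewrite /FF22 /EE22 /BBy /Dq z3; ring.
Qed.
End S6.

Section S7.
Variable K : numClosedFieldType.
Ltac fld := field; rewrite ?nat_neq0 //.

Lemma covF (q11 q12 q22 k0 k1 k2 k3 al be s1 t1 s2 t2 : K) :
  let Q11 := tq11 q11 q12 q22 s1 t1 s2 t2 in
  let Q12 := tq12 q11 q12 q22 s1 t1 s2 t2 in
  let Q22 := tq22 q11 q12 q22 s1 t1 s2 t2 in
  let K0 := tk0 k0 k1 k2 k3 s1 t1 s2 t2 in
  let K1 := tk1 k0 k1 k2 k3 s1 t1 s2 t2 in
  let K2 := tk2 k0 k1 k2 k3 s1 t1 s2 t2 in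
  let K3 := tk3 k0 k1 k2 k3 s1 t1 s2 t2 in
  let A := tlx al be s1 t1 s2 t2 in let B := tly al be s1 t1 s2 t2 in
  let d := s1 * t2 - s2 * t1 in
  [/\ FF11 Q11 Q12 Q22 K0 K1 K2 K3 A B = d^+2 * tq11 (FF11 q11 q12 q22 k0 k1 k2 k3 al be)
         (FF12 q11 q12 q22 k0 k1 k2 k3 al be) (FF22 q11 q12 q22 k0 k1 k2 k3 al be) s1 t1 s2 t2,
      FF12 Q11 Q12 Q22 K0 K1 K2 K3 A B = d^+2 * tq12 (FF11 q11 q12 q22 k0 k1 k2 k3 al be)
         (FF12 q11 q12 q22 k0 k1 k2 k3 al be) (FF22 q11 q12 q22 k0 k1 k2 k3 al be) s1 t1 s2 t2,
      FF22 Q11 Q12 Q22 K0 K1 K2 K3 A B = d^+2 * tq22 (FF11 q11 q12 q22 k0 k1 k2 k3 al be)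
         (FF12 q11 q12 q22 k0 k1 k2 k3 al be) (FF22 q11 q12 q22 k0 k1 k2 k3 al be) s1 t1 s2 t2
    & DL Q11 Q12 Q22 A B = d^+2 * DL q11 q12 q22 al be].
Proof.
rewrite /FF11 /FF12 /FF22 /DL /BBx /BBy /EE11 /EE12 /EE22 /Dq /tq11 /tq12 /tq22 /tk0 /tk1 /tk2 /tk3 /tlx /tly /=.
by split; ring.
Qed.

Lemma N2 (q11 q12 q22 k0 k1 k2 k3 al be : K) :
  FF11 q11 q12 q22 k0 k1 k2 k3 al be = 0 -> FF12 q11 q12 q22 k0 k1 k2 k3 al be = 0 ->
  FF22 q11 q12 q22 k0 k1 k2 k3 al be = 0 -> DL q11 q12 q22 al be != 0 ->
  BBx q11 q12 q22 k0 k1 k2 k3 = 0 /\ BBy q11 q12 q22 k0 k1 k2 k3 = 0.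
Proof.
move=> h11 h12 h22 hDL.
(* generic reduction to special coordinates *)
suff gen : forall p11 p12 p22 s1 t1 s2 t2 : K, s1*t2 - s2*t1 != 0 ->
  q11 = tq11 p11 p12 p22 s1 t1 s2 t2 -> q12 = tq12 p11 p12 p22 s1 t1 s2 t2 ->
  q22 = tq22 p11 p12 p22 s1 t1 s2 t2 ->
  (forall K0 K1 K2 K3 a b : K, FF11 p11 p12 p22 K0 K1 K2 K3 a b = 0 ->
     FF12 p11 p12 p22 K0 K1 K2 K3 a b = 0 -> FF22 p11 p12 p22 K0 K1 K2 K3 a b = 0 ->
     DL p11 p12 p22 a b != 0 ->
     BBx p11 p12 p22 K0 K1 K2 K3 = 0 /\ BBy p11 p12 p22 K0 K1 K2 K3 = 0) ->
  BBx q11 q12 q22 k0 k1 k2 k3 = 0 /\ BBy q11 q12 q22 k0 k1 k2 k3 = 0.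
  case: (eqVneq (Dq q11 q12 q22) 0) => hD.
    case: (boolP [&& q11 == 0, q12 == 0 & q22 == 0]) => hq.
      move/and3P: hq => [/eqP -> /eqP -> /eqP ->].
      by rewrite /BBx /BBy; split; ring.
    have [s1 [t1 [s2 [t2 [hd e1 e2 e3]]]]] := fact_deg hD hq.
    apply: (gen _ _ _ _ _ _ _ hd e1 e2 e3) => K0 K1 K2 K3 a b f1 f2 f3 fD.
    have [z2 z3] := N2_x2 f1 f2 f3 fD.
    by rewrite /BBx /BBy z2 z3; split; ring.
  have [s1 [t1 [s2 [t2 [hd e1 e2 e3]]]]] := fact_nondeg hD.
  apply: (gen _ _ _ _ _ _ _ hd e1 e2 e3) => K0 K1 K2 K3 a b f1 f2 f3 fD.
  have [z1 z2] := N2_xy f1 f2 f3 fD.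
  by rewrite /BBx /BBy z1 z2; split; ring.
move=> p11 p12 p22 s1 t1 s2 t2 hd e1 e2 e3 sp.
set d := s1*t2 - s2*t1.
set a' := t2/d; set b' := -t1/d; set c' := -s2/d; set e' := s1/d.
have [f0 f1 f2 f3] := tk_inv k0 k1 k2 k3 hd.
have [g1 g2] := tl_inv al be hd.
rewrite /= -/d -/a' -/b' -/c' -/e' in f0 f1 f2 f3 g1 g2.
set K0 := tk0 k0 k1 k2 k3 a' b' c' e' in f0 f1 f2 f3.
set K1 := tk1 k0 k1 k2 k3 a' b' c' e' in f0 f1 f2 f3.
set K2 := tk2 k0 k1 k2 k3 a' b' c' e' in f0 f1 f2 f3.
set K3 := tk3 k0 k1 k2 k3 a' b' c' e' in f0 f1 f2 f3.
set A := tlx al be a' b' c' e' in g1 g2.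
set B := tly al be a' b' c' e' in g1 g2.
have [c1 c2 c3 c4] := covF p11 p12 p22 K0 K1 K2 K3 A B s1 t1 s2 t2.
rewrite /= -f0 -f1 -f2 -f3 -g1 -g2 -e1 -e2 -e3 -/d in c1 c2 c3 c4.
have hd2 : d ^+ 2 != 0 by rewrite expf_neq0.
move: c1 c2 c3; rewrite h11 h12 h22 => /esym/(lin0 hd2) c1 /esym/(lin0 hd2) c2 /esym/(lin0 hd2) c3.
have [z1 z2 z3] := tq_inj hd c1 c2 c3.
have dl : DL p11 p12 p22 A B != 0.
  by apply: contraNneq hDL => z; rewrite c4 z mulr0.
have [b1 b2] := sp K0 K1 K2 K3 A B z1 z2 z3 dl.
have [d1 d2 _ _ _] := covB p11 p12 p22 K0 K1 K2 K3 s1 t1 s2 t2.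
rewrite /= -f0 -f1 -f2 -f3 -e1 -e2 -e3 in d1 d2.
by rewrite d1 d2 b1 b2 /tlx /tly; split; ring.
Qed.
End S7.

Section S8.
Variable K : numClosedFieldType.
Ltac fld := field; rewrite ?nat_neq0 //.

Definition H111 (c111 c112 c113 c122 c123 c133 c222 c223 c233 c333 : K) : K :=
  12%:R*c111*c122*c133 - 3%:R*c111*c123^+2 + 4%:R*c112*c113*c123 - 4%:R*c112^+2*c133 - 4%:R*c113^+2*c122.
Definition H112 (c111 c112 c113 c122 c123 c133 c222 c223 c233 c333 : K) : K :=
  12%:R*c111*c122*c233 - 12%:R*c111*c123*c223 + 36%:R*c111*c133*c222 + 8%:R*c112*c113*c223 - 4%:R*c112*c122*c133 + c112*c123^+2 - 4%:R*c112^+2*c233 - 12%:R*c113^+2*c222.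
Definition H113 (c111 c112 c113 c122 c123 c133 c222 c223 c233 c333 : K) : K :=
  36%:R*c111*c122*c333 - 12%:R*c111*c123*c233 + 12%:R*c111*c133*c223 + 8%:R*c112*c113*c233 - 12%:R*c112^+2*c333 - 4%:R*c113*c122*c133 + c113*c123^+2 - 4%:R*c113^+2*c223.
Definition H122 (c111 c112 c113 c122 c123 c133 c222 c223 c233 c333 : K) : K :=
  36%:R*c111*c222*c233 - 12%:R*c111*c223^+2 - 4%:R*c112*c122*c233 + 12%:R*c112*c133*c222 + 8%:R*c113*c122*c223 - 12%:R*c113*c123*c222 + c122*c123^+2 - 4%:R*c122^+2*c133.
Definition H123 (c111 c112 c113 c122 c123 c133 c222 c223 c233 c333 : K) : K :=
  108%:R*c111*c222*c333 - 12%:R*c111*c223*c233 - 12%:R*c112*c122*c333 - 4%:R*c112*c123*c233 + 12%:R*c112*c133*c223 + 12%:R*c113*c122*c233 - 4%:R*c113*c123*c223 - 12%:R*c113*c133*c222 - 4%:R*c122*c123*c133 + c123^+3.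
Definition H133 (c111 c112 c113 c122 c123 c133 c222 c223 c233 c333 : K) : K :=
  36%:R*c111*c223*c333 - 12%:R*c111*c233^+2 - 12%:R*c112*c123*c333 + 8%:R*c112*c133*c233 + 12%:R*c113*c122*c333 - 4%:R*c113*c133*c223 - 4%:R*c122*c133^+2 + c123^+2*c133.
Definition H222 (c111 c112 c113 c122 c123 c133 c222 c223 c233 c333 : K) : K :=
  12%:R*c112*c222*c233 - 4%:R*c112*c223^+2 + 4%:R*c122*c123*c223 - 4%:R*c122^+2*c233 - 3%:R*c123^+2*c222.
Definition H223 (c111 c112 c113 c122 c123 c133 c222 c223 c233 c333 : K) : K :=
  36%:R*c112*c222*c333 - 4%:R*c112*c223*c233 + 12%:R*c113*c222*c233 - 4%:R*c113*c223^+2 + 8%:R*c122*c133*c223 - 12%:R*c122^+2*c333 - 12%:R*c123*c133*c222 + c123^+2*c223.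
Definition H233 (c111 c112 c113 c122 c123 c133 c222 c223 c233 c333 : K) : K :=
  12%:R*c112*c223*c333 - 4%:R*c112*c233^+2 + 36%:R*c113*c222*c333 - 4%:R*c113*c223*c233 - 12%:R*c122*c123*c333 + 8%:R*c122*c133*c233 + c123^+2*c233 - 12%:R*c133^+2*c222.
Definition H333 (c111 c112 c113 c122 c123 c133 c222 c223 c233 c333 : K) : K :=
  12%:R*c113*c223*c333 - 4%:R*c113*c233^+2 + 4%:R*c123*c133*c233 - 3%:R*c123^+2*c333 - 4%:R*c133^+2*c223.
Definition R111 (a1 b1 d1 a2 b2 d2 a3 b3 d3 : K) : K :=
  a1*a2*a3.
Definition R112 (a1 b1 d1 a2 b2 d2 a3 b3 d3 : K) : K :=
  a1*a2*b3 + a1*a3*b2 + a2*a3*b1.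
Definition R113 (a1 b1 d1 a2 b2 d2 a3 b3 d3 : K) : K :=
  a1*a2*d3 + a1*a3*d2 + a2*a3*d1.
Definition R122 (a1 b1 d1 a2 b2 d2 a3 b3 d3 : K) : K :=
  a1*b2*b3 + a2*b1*b3 + a3*b1*b2.
Definition R123 (a1 b1 d1 a2 b2 d2 a3 b3 d3 : K) : K :=
  a1*b2*d3 + a1*b3*d2 + a2*b1*d3 + a2*b3*d1 + a3*b1*d2 + a3*b2*d1.
Definition R133 (a1 b1 d1 a2 b2 d2 a3 b3 d3 : K) : K :=
  a1*d2*d3 + a2*d1*d3 + a3*d1*d2.
Definition R222 (a1 b1 d1 a2 b2 d2 a3 b3 d3 : K) : K :=
  b1*b2*b3.
Definition R223 (a1 b1 d1 a2 b2 d2 a3 b3 d3 : K) : K :=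
  b1*b2*d3 + b1*b3*d2 + b2*b3*d1.
Definition R233 (a1 b1 d1 a2 b2 d2 a3 b3 d3 : K) : K :=
  b1*d2*d3 + b2*d1*d3 + b3*d1*d2.
Definition R333 (a1 b1 d1 a2 b2 d2 a3 b3 d3 : K) : K :=
  d1*d2*d3.
Definition P111 (a al be q11 q12 q22 k0 k1 k2 k3 : K) : K :=
  a*al*q11 + a*al^+3 + a*k0.
Definition P112 (a al be q11 q12 q22 k0 k1 k2 k3 : K) : K :=
  a*al*q12 + 3%:R*a*al^+2*be + a*be*q11 + a*k1.
Definition P113 (a al be q11 q12 q22 k0 k1 k2 k3 : K) : K :=
  3%:R*a*al^+2 + a*q11.
Definition P122 (a al be q11 q12 q22 k0 k1 k2 k3 : K) : K :=
  3%:R*a*al*be^+2 + a*al*q22 + a*be*q12 + a*k2.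
Definition P123 (a al be q11 q12 q22 k0 k1 k2 k3 : K) : K :=
  6%:R*a*al*be + a*q12.
Definition P133 (a al be q11 q12 q22 k0 k1 k2 k3 : K) : K :=
  3%:R*a*al.
Definition P222 (a al be q11 q12 q22 k0 k1 k2 k3 : K) : K :=
  a*be*q22 + a*be^+3 + a*k3.
Definition P223 (a al be q11 q12 q22 k0 k1 k2 k3 : K) : K :=
  3%:R*a*be^+2 + a*q22.
Definition P233 (a al be q11 q12 q22 k0 k1 k2 k3 : K) : K :=
  3%:R*a*be.
Definition P333 (a al be q11 q12 q22 k0 k1 k2 k3 : K) : K :=
  a.
Definition G113 (c111 c112 c113 c122 c123 c133 c222 c223 c233 c333 : K) : K :=
  H333 c111 c112 c113 c122 c123 c133 c222 c223 c233 c333 * c113 - c333 * H113 c111 c112 c113 c122 c123 c133 c222 c223 c233 c333.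
Definition G123 (c111 c112 c113 c122 c123 c133 c222 c223 c233 c333 : K) : K :=
  H333 c111 c112 c113 c122 c123 c133 c222 c223 c233 c333 * c123 - c333 * H123 c111 c112 c113 c122 c123 c133 c222 c223 c233 c333.
Definition G223 (c111 c112 c113 c122 c123 c133 c222 c223 c233 c333 : K) : K :=
  H333 c111 c112 c113 c122 c123 c133 c222 c223 c233 c333 * c223 - c333 * H223 c111 c112 c113 c122 c123 c133 c222 c223 c233 c333.
Definition G133 (c111 c112 c113 c122 c123 c133 c222 c223 c233 c333 : K) : K :=
  H333 c111 c112 c113 c122 c123 c133 c222 c223 c233 c333 * c133 - c333 * H133 c111 c112 c113 c122 c123 c133 c222 c223 c233 c333.
Definition G233 (c111 c112 c113 c122 c123 c133 c222 c223 c233 c333 : K) : K :=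
  H333 c111 c112 c113 c122 c123 c133 c222 c223 c233 c333 * c233 - c333 * H233 c111 c112 c113 c122 c123 c133 c222 c223 c233 c333.
Definition isprod (c111 c112 c113 c122 c123 c133 c222 c223 c233 c333 a1 b1 d1 a2 b2 d2 a3 b3 d3 : K) : Prop :=
  [/\ c111 = R111 a1 b1 d1 a2 b2 d2 a3 b3 d3, c112 = R112 a1 b1 d1 a2 b2 d2 a3 b3 d3, c113 = R113 a1 b1 d1 a2 b2 d2 a3 b3 d3, c122 = R122 a1 b1 d1 a2 b2 d2 a3 b3 d3 & c123 = R123 a1 b1 d1 a2 b2 d2 a3 b3 d3] /\
  [/\ c133 = R133 a1 b1 d1 a2 b2 d2 a3 b3 d3, c222 = R222 a1 b1 d1 a2 b2 d2 a3 b3 d3, c223 = R223 a1 b1 d1 a2 b2 d2 a3 b3 d3, c233 = R233 a1 b1 d1 a2 b2 d2 a3 b3 d3 & c333 = R333 a1 b1 d1 a2 b2 d2 a3 b3 d3].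
Definition redu (c111 c112 c113 c122 c123 c133 c222 c223 c233 c333 : K) : Prop := exists a1 b1 d1 a2 b2 d2 a3 b3 d3 : K, isprod c111 c112 c113 c122 c123 c133 c222 c223 c233 c333 a1 b1 d1 a2 b2 d2 a3 b3 d3.
Definition cond5 (c111 c112 c113 c122 c123 c133 c222 c223 c233 c333 : K) : Prop :=
  [/\ G113 c111 c112 c113 c122 c123 c133 c222 c223 c233 c333 = 0, G123 c111 c112 c113 c122 c123 c133 c222 c223 c233 c333 = 0, G223 c111 c112 c113 c122 c123 c133 c222 c223 c233 c333 = 0, G133 c111 c112 c113 c122 c123 c133 c222 c223 c233 c333 = 0 & G233 c111 c112 c113 c122 c123 c133 c222 c223 c233 c333 = 0].
Definition cond3 (c111 c112 c113 c122 c123 c133 c222 c223 c233 c333 : K) : Prop :=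
  [/\ G113 c111 c112 c113 c122 c123 c133 c222 c223 c233 c333 = 0, G123 c111 c112 c113 c122 c123 c133 c222 c223 c233 c333 = 0 & G223 c111 c112 c113 c122 c123 c133 c222 c223 c233 c333 = 0].
Definition stmt (c111 c112 c113 c122 c123 c133 c222 c223 c233 c333 : K) : Prop :=
  (redu c111 c112 c113 c122 c123 c133 c222 c223 c233 c333 <-> cond5 c111 c112 c113 c122 c123 c133 c222 c223 c233 c333) /\
  (4%:R * c113 * c223 - c123 ^+ 2 != 0 -> (redu c111 c112 c113 c122 c123 c133 c222 c223 c233 c333 <-> cond3 c111 c112 c113 c122 c123 c133 c222 c223 c233 c333)).

Lemma KEYp a al be q11 q12 q22 k0 k1 k2 k3 :
  [/\ G113 (P111 a al be q11 q12 q22 k0 k1 k2 k3) (P112 a al be q11 q12 q22 k0 k1 k2 k3) (P113 a al be q11 q12 q22 k0 k1 k2 k3) (P122 a al be q11 q12 q22 k0 k1 k2 k3) (P123 a al be q11 q12 q22 k0 k1 k2 k3) (P133 a al be q11 q12 q22 k0 k1 k2 k3) (P222 a al be q11 q12 q22 k0 k1 k2 k3) (P223 a al be q11 q12 q22 k0 k1 k2 k3) (P233 a al be q11 q12 q22 k0 k1 k2 k3) (P333 a al be q11 q12 q22 k0 k1 k2 k3) = a^+4 * FF11 q11 q12 q22 k0 k1 k2 k3 al be,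
      G123 (P111 a al be q11 q12 q22 k0 k1 k2 k3) (P112 a al be q11 q12 q22 k0 k1 k2 k3) (P113 a al be q11 q12 q22 k0 k1 k2 k3) (P122 a al be q11 q12 q22 k0 k1 k2 k3) (P123 a al be q11 q12 q22 k0 k1 k2 k3) (P133 a al be q11 q12 q22 k0 k1 k2 k3) (P222 a al be q11 q12 q22 k0 k1 k2 k3) (P223 a al be q11 q12 q22 k0 k1 k2 k3) (P233 a al be q11 q12 q22 k0 k1 k2 k3) (P333 a al be q11 q12 q22 k0 k1 k2 k3) = a^+4 * FF12 q11 q12 q22 k0 k1 k2 k3 al be,
      G223 (P111 a al be q11 q12 q22 k0 k1 k2 k3) (P112 a al be q11 q12 q22 k0 k1 k2 k3) (P113 a al be q11 q12 q22 k0 k1 k2 k3) (P122 a al be q11 q12 q22 k0 k1 k2 k3) (P123 a al be q11 q12 q22 k0 k1 k2 k3) (P133 a al be q11 q12 q22 k0 k1 k2 k3) (P222 a al be q11 q12 q22 k0 k1 k2 k3) (P223 a al be q11 q12 q22 k0 k1 k2 k3) (P233 a al be q11 q12 q22 k0 k1 k2 k3) (P333 a al be q11 q12 q22 k0 k1 k2 k3) = a^+4 * FF22 q11 q12 q22 k0 k1 k2 k3 al be,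
      G133 (P111 a al be q11 q12 q22 k0 k1 k2 k3) (P112 a al be q11 q12 q22 k0 k1 k2 k3) (P113 a al be q11 q12 q22 k0 k1 k2 k3) (P122 a al be q11 q12 q22 k0 k1 k2 k3) (P123 a al be q11 q12 q22 k0 k1 k2 k3) (P133 a al be q11 q12 q22 k0 k1 k2 k3) (P222 a al be q11 q12 q22 k0 k1 k2 k3) (P223 a al be q11 q12 q22 k0 k1 k2 k3) (P233 a al be q11 q12 q22 k0 k1 k2 k3) (P333 a al be q11 q12 q22 k0 k1 k2 k3) = - 12%:R * a^+4 * BBx q11 q12 q22 k0 k1 k2 k3
    & G233 (P111 a al be q11 q12 q22 k0 k1 k2 k3) (P112 a al be q11 q12 q22 k0 k1 k2 k3) (P113 a al be q11 q12 q22 k0 k1 k2 k3) (P122 a al be q11 q12 q22 k0 k1 k2 k3) (P123 a al be q11 q12 q22 k0 k1 k2 k3) (P133 a al be q11 q12 q22 k0 k1 k2 k3) (P222 a al be q11 q12 q22 k0 k1 k2 k3) (P223 a al be q11 q12 q22 k0 k1 k2 k3) (P233 a al be q11 q12 q22 k0 k1 k2 k3) (P333 a al be q11 q12 q22 k0 k1 k2 k3) = - 12%:R * a^+4 * BBy q11 q12 q22 k0 k1 k2 k3].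
Proof.
rewrite /G113 /G123 /G223 /G133 /G233 /H111 /H112 /H113 /H122 /H123 /H133 /H222 /H223 /H233 /H333.
rewrite /P111 /P112 /P113 /P122 /P123 /P133 /P222 /P223 /P233 /P333.
rewrite /FF11 /FF12 /FF22 /EE11 /EE12 /EE22 /BBx /BBy /Dq.
by split; ring.
Qed.
End S8.

Section S9.
Variable K : numClosedFieldType.
Ltac fld := field; rewrite ?nat_neq0 //.

Lemma bwd (a al be q11 q12 q22 k0 k1 k2 k3 : K) : nsol q11 q12 q22 k0 k1 k2 k3 -> redu (P111 a al be q11 q12 q22 k0 k1 k2 k3) (P112 a al be q11 q12 q22 k0 k1 k2 k3) (P113 a al be q11 q12 q22 k0 k1 k2 k3) (P122 a al be q11 q12 q22 k0 k1 k2 k3) (P123 a al be q11 q12 q22 k0 k1 k2 k3) (P133 a al be q11 q12 q22 k0 k1 k2 k3) (P222 a al be q11 q12 q22 k0 k1 k2 k3) (P223 a al be q11 q12 q22 k0 k1 k2 k3) (P233 a al be q11 q12 q22 k0 k1 k2 k3) (P333 a al be q11 q12 q22 k0 k1 k2 k3).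
Proof.
move=> [u1 [v1 [u2 [v2 [u3 [v3 [[hu hv -> -> ->] [-> -> -> ->]]]]]]]].
have -> : u3 = - u1 - u2 by apply: (addrI (u1 + u2)); rewrite addrA hu; ring.
have -> : v3 = - v1 - v2 by apply: (addrI (v1 + v2)); rewrite addrA hv; ring.
exists (a * (al + u1)), (a * (be + v1)), a, (al + u2), (be + v2), 1,
  (al - u1 - u2), (be - v1 - v2), 1.
rewrite /isprod /P111 /P112 /P113 /P122 /P123 /P133 /P222 /P223 /P233 /P333.
rewrite /R111 /R112 /R113 /R122 /R123 /R133 /R222 /R223 /R233 /R333.
by split; split; ring.
Qed.

Lemma fwd (a al be q11 q12 q22 k0 k1 k2 k3 : K) : a != 0 -> redu (P111 a al be q11 q12 q22 k0 k1 k2 k3) (P112 a al be q11 q12 q22 k0 k1 k2 k3) (P113 a al be q11 q12 q22 k0 k1 k2 k3) (P122 a al be q11 q12 q22 k0 k1 k2 k3) (P123 a al be q11 q12 q22 k0 k1 k2 k3) (P133 a al be q11 q12 q22 k0 k1 k2 k3) (P222 a al be q11 q12 q22 k0 k1 k2 k3) (P223 a al be q11 q12 q22 k0 k1 k2 k3) (P233 a al be q11 q12 q22 k0 k1 k2 k3) (P333 a al be q11 q12 q22 k0 k1 k2 k3) -> nsol q11 q12 q22 k0 k1 k2 k3.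
Proof.
move=> ha [a1 [b1 [d1 [a2 [b2 [d2 [a3 [b3 [d3 [[e111 e112 e113 e122 e123] [e133 e222 e223 e233 e333]]]]]]]]]]].
have hal : al = P133 a al be q11 q12 q22 k0 k1 k2 k3 / (3%:R * a) by rewrite /P133; fld.
have hbe : be = P233 a al be q11 q12 q22 k0 k1 k2 k3 / (3%:R * a) by rewrite /P233; fld.
have hq11 : q11 = (P113 a al be q11 q12 q22 k0 k1 k2 k3 - 3%:R * a * al^+2) / a by rewrite /P113; fld.
have hq12 : q12 = (P123 a al be q11 q12 q22 k0 k1 k2 k3 - 6%:R * a * al * be) / a by rewrite /P123; fld.
have hq22 : q22 = (P223 a al be q11 q12 q22 k0 k1 k2 k3 - 3%:R * a * be^+2) / a by rewrite /P223; fld.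
have hk0 : k0 = P111 a al be q11 q12 q22 k0 k1 k2 k3 / a - al^+3 - al * q11 by rewrite /P111; fld.
have hk1 : k1 = P112 a al be q11 q12 q22 k0 k1 k2 k3 / a - 3%:R * al^+2 * be - al * q12 - be * q11 by rewrite /P112; fld.
have hk2 : k2 = P122 a al be q11 q12 q22 k0 k1 k2 k3 / a - 3%:R * al * be^+2 - al * q22 - be * q12 by rewrite /P122; fld.
have hk3 : k3 = P222 a al be q11 q12 q22 k0 k1 k2 k3 / a - be^+3 - be * q22 by rewrite /P222; fld.
rewrite e133 in hal; rewrite e233 in hbe; rewrite e113 in hq11; rewrite e123 in hq12;
rewrite e223 in hq22; rewrite e111 in hk0; rewrite e112 in hk1; rewrite e122 in hk2;
rewrite e222 in hk3.
rewrite /P333 in e333; subst a.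
have hd1 : d1 != 0 by apply: contraNneq ha => ->; apply/eqP; rewrite /R333; ring.
have hd2 : d2 != 0 by apply: contraNneq ha => ->; apply/eqP; rewrite /R333; ring.
have hd3 : d3 != 0 by apply: contraNneq ha => ->; apply/eqP; rewrite /R333; ring.
rewrite hk0 hk1 hk2 hk3 hq11 hq12 hq22 hal hbe.
rewrite /R111 /R112 /R113 /R122 /R123 /R133 /R222 /R223 /R233 /R333.
set A := (a1 * d2 * d3 + a2 * d1 * d3 + a3 * d1 * d2) / (3%:R * (d1 * d2 * d3)).
set B := (b1 * d2 * d3 + b2 * d1 * d3 + b3 * d1 * d2) / (3%:R * (d1 * d2 * d3)).
exists (a1/d1 - A), (b1/d1 - B), (a2/d2 - A), (b2/d2 - B), (a3/d3 - A), (b3/d3 - B).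
rewrite /A /B.
split; split; fld. all: by rewrite ?hd1 ?hd2 ?hd3.
Qed.
End S9.

Section S10.
Variable K : numClosedFieldType.
Ltac fld := field; rewrite ?nat_neq0 //.

Lemma main_p (a al be q11 q12 q22 k0 k1 k2 k3 : K) : a != 0 -> stmt (P111 a al be q11 q12 q22 k0 k1 k2 k3) (P112 a al be q11 q12 q22 k0 k1 k2 k3) (P113 a al be q11 q12 q22 k0 k1 k2 k3) (P122 a al be q11 q12 q22 k0 k1 k2 k3) (P123 a al be q11 q12 q22 k0 k1 k2 k3) (P133 a al be q11 q12 q22 k0 k1 k2 k3) (P222 a al be q11 q12 q22 k0 k1 k2 k3) (P223 a al be q11 q12 q22 k0 k1 k2 k3) (P233 a al be q11 q12 q22 k0 k1 k2 k3) (P333 a al be q11 q12 q22 k0 k1 k2 k3).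
Proof.
move=> ha.
have [g1 g2 g3 g4 g5] := KEYp a al be q11 q12 q22 k0 k1 k2 k3.
have ha4 : a ^+ 4 != 0 by rewrite expf_neq0.
have hb : - 12%:R * a ^+ 4 != 0 by rewrite mulf_neq0 // oppr_eq0 nat_neq0.
have c5 : cond5 (P111 a al be q11 q12 q22 k0 k1 k2 k3) (P112 a al be q11 q12 q22 k0 k1 k2 k3) (P113 a al be q11 q12 q22 k0 k1 k2 k3) (P122 a al be q11 q12 q22 k0 k1 k2 k3) (P123 a al be q11 q12 q22 k0 k1 k2 k3) (P133 a al be q11 q12 q22 k0 k1 k2 k3) (P222 a al be q11 q12 q22 k0 k1 k2 k3) (P223 a al be q11 q12 q22 k0 k1 k2 k3) (P233 a al be q11 q12 q22 k0 k1 k2 k3) (P333 a al be q11 q12 q22 k0 k1 k2 k3) <->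
   [/\ BBx q11 q12 q22 k0 k1 k2 k3 = 0, BBy q11 q12 q22 k0 k1 k2 k3 = 0, EE11 q11 q12 q22 k0 k1 k2 k3 = 0, EE12 q11 q12 q22 k0 k1 k2 k3 = 0 & EE22 q11 q12 q22 k0 k1 k2 k3 = 0].
  rewrite /cond5 g1 g2 g3 g4 g5; split.
    move=> [f1 f2 f3 b1 b2].
    have bx := lin0 hb b1; have by' := lin0 hb b2.
    have ff1 := lin0 ha4 f1; have ff2 := lin0 ha4 f2; have ff3 := lin0 ha4 f3.
    move: ff1 ff2 ff3; rewrite /FF11 /FF12 /FF22 bx by' !(mulr0, subr0, addr0) => ff1 ff2 ff3.
    by split.
  move=> [b1 b2 f1 f2 f3]; rewrite /FF11 /FF12 /FF22 b1 b2 f1 f2 f3.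
  by split; ring.
have p1 : redu (P111 a al be q11 q12 q22 k0 k1 k2 k3) (P112 a al be q11 q12 q22 k0 k1 k2 k3) (P113 a al be q11 q12 q22 k0 k1 k2 k3) (P122 a al be q11 q12 q22 k0 k1 k2 k3) (P123 a al be q11 q12 q22 k0 k1 k2 k3) (P133 a al be q11 q12 q22 k0 k1 k2 k3) (P222 a al be q11 q12 q22 k0 k1 k2 k3) (P223 a al be q11 q12 q22 k0 k1 k2 k3) (P233 a al be q11 q12 q22 k0 k1 k2 k3) (P333 a al be q11 q12 q22 k0 k1 k2 k3) <-> cond5 (P111 a al be q11 q12 q22 k0 k1 k2 k3) (P112 a al be q11 q12 q22 k0 k1 k2 k3) (P113 a al be q11 q12 q22 k0 k1 k2 k3) (P122 a al be q11 q12 q22 k0 k1 k2 k3) (P123 a al be q11 q12 q22 k0 k1 k2 k3) (P133 a al be q11 q12 q22 k0 k1 k2 k3) (P222 a al be q11 q12 q22 k0 k1 k2 k3) (P223 a al be q11 q12 q22 k0 k1 k2 k3) (P233 a al be q11 q12 q22 k0 k1 k2 k3) (P333 a al be q11 q12 q22 k0 k1 k2 k3).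
  split.
    move=> r; apply/c5; exact: N_fwd (fwd ha r).
  move/c5 => [b1 b2 f1 f2 f3]; apply: bwd; exact: N_bwd.
split => // h4.
have hDL : DL q11 q12 q22 al be != 0.
  apply: contraNneq h4 => z; apply/eqP.
  rewrite (_ : _ - _ = a ^+ 2 * DL q11 q12 q22 al be); first by rewrite z mulr0.
  by rewrite /P113 /P223 /P123 /DL; ring.
split.
  by move/p1 => [f1 f2 f3 _ _]; split.
rewrite /cond3 g1 g2 g3 => [[f1 f2 f3]].
have ff1 := lin0 ha4 f1; have ff2 := lin0 ha4 f2; have ff3 := lin0 ha4 f3.
have [bx by'] := N2 ff1 ff2 ff3 hDL.
move: ff1 ff2 ff3; rewrite /FF11 /FF12 /FF22 bx by' !(mulr0, subr0, addr0) => ff1 ff2 ff3.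
apply: bwd; exact: N_bwd.
Qed.

Lemma main_scalar (c111 c112 c113 c122 c123 c133 c222 c223 c233 c333 : K) : c333 != 0 -> stmt c111 c112 c113 c122 c123 c133 c222 c223 c233 c333.
Proof.
move=> h.
pose al := c133 / (3%:R * c333). pose be := c233 / (3%:R * c333).
pose q11 := c113 / c333 - 3%:R * al ^+ 2. pose q12 := c123 / c333 - 6%:R * al * be.
pose q22 := c223 / c333 - 3%:R * be ^+ 2.
pose k0 := c111 / c333 - al ^+ 3 - al * q11.
pose k1 := c112 / c333 - 3%:R * al ^+ 2 * be - al * q12 - be * q11.
pose k2 := c122 / c333 - 3%:R * al * be ^+ 2 - al * q22 - be * q12.
pose k3 := c222 / c333 - be ^+ 3 - be * q22.
have := main_p al be q11 q12 q22 k0 k1 k2 k3 h.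
have -> : P111 c333 al be q11 q12 q22 k0 k1 k2 k3 = c111 by rewrite /P111 /k0 /k1 /k2 /k3 /q11 /q12 /q22 /al /be; fld.
have -> : P112 c333 al be q11 q12 q22 k0 k1 k2 k3 = c112 by rewrite /P112 /k0 /k1 /k2 /k3 /q11 /q12 /q22 /al /be; fld.
have -> : P113 c333 al be q11 q12 q22 k0 k1 k2 k3 = c113 by rewrite /P113 /k0 /k1 /k2 /k3 /q11 /q12 /q22 /al /be; fld.
have -> : P122 c333 al be q11 q12 q22 k0 k1 k2 k3 = c122 by rewrite /P122 /k0 /k1 /k2 /k3 /q11 /q12 /q22 /al /be; fld.
have -> : P123 c333 al be q11 q12 q22 k0 k1 k2 k3 = c123 by rewrite /P123 /k0 /k1 /k2 /k3 /q11 /q12 /q22 /al /be; fld.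
have -> : P133 c333 al be q11 q12 q22 k0 k1 k2 k3 = c133 by rewrite /P133 /k0 /k1 /k2 /k3 /q11 /q12 /q22 /al /be; fld.
have -> : P222 c333 al be q11 q12 q22 k0 k1 k2 k3 = c222 by rewrite /P222 /k0 /k1 /k2 /k3 /q11 /q12 /q22 /al /be; fld.
have -> : P223 c333 al be q11 q12 q22 k0 k1 k2 k3 = c223 by rewrite /P223 /k0 /k1 /k2 /k3 /q11 /q12 /q22 /al /be; fld.
have -> : P233 c333 al be q11 q12 q22 k0 k1 k2 k3 = c233 by rewrite /P233 /k0 /k1 /k2 /k3 /q11 /q12 /q22 /al /be; fld.
have -> : P333 c333 al be q11 q12 q22 k0 k1 k2 k3 = c333 by rewrite /P333 /k0 /k1 /k2 /k3 /q11 /q12 /q22 /al /be; fld.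
done.
Qed.
End S10.

Lemma det3 (R : comNzRingType) (A : 'M[R]_3) : \det A =
  A e1 e1 * (A e2 e2 * A e3 e3 - A e2 e3 * A e3 e2)
  - A e1 e2 * (A e2 e1 * A e3 e3 - A e2 e3 * A e3 e1)
  + A e1 e3 * (A e2 e1 * A e3 e2 - A e2 e2 * A e3 e1).
Proof.
pose a (i j : nat) := A (inord i) (inord j).
have hA : forall i j, A i j = a i j by move=> i j; rewrite /a !inord_val.
rewrite (expand_det_row _ e1) !big_ord_recl big_ord0 /cofactor.
rewrite !(expand_det_row _ ord0) !big_ord_recl !big_ord0 /cofactor !det_mx11 !mxE /=.
by rewrite !hA /= /a; ring.
Qed.
Lemma mnm_eqE (m m' : 'X_{1..3}) : (m == m') = [&& m e1 == m' e1, m e2 == m' e2 & m e3 == m' e3].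
Proof.
apply/eqP/and3P => [->|[/eqP h1 /eqP h2 /eqP h3]]; first by [].
apply/mnmP => i; case: i => [[|[|[|//]]] Hi].
- by have -> : Ordinal Hi = e1 by apply/val_inj.
- by have -> : Ordinal Hi = e2 by apply/val_inj.
- by have -> : Ordinal Hi = e3 by apply/val_inj.
Qed.
Lemma mdeg3 (m : 'X_{1..3}) : mdeg m = (m e1 + m e2 + m e3)%N.
Proof.
rewrite mdegE !big_ord_recl big_ord0 addn0 addnA.
congr (m _ + m _ + m _)%N; by apply/val_inj.
Qed.
Section MP.
Lemma eqE11 : (e1 == e1) = true. Proof. by []. Qed.
Lemma eqE12 : (e1 == e2) = false. Proof. by []. Qed.
Lemma eqE13 : (e1 == e3) = false. Proof. by []. Qed.
Lemma eqE21 : (e2 == e1) = false. Proof. by []. Qed.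
Lemma eqE22 : (e2 == e2) = true. Proof. by []. Qed.
Lemma eqE23 : (e2 == e3) = false. Proof. by []. Qed.
Lemma eqE31 : (e3 == e1) = false. Proof. by []. Qed.
Lemma eqE32 : (e3 == e2) = false. Proof. by []. Qed.
Lemma eqE33 : (e3 == e3) = true. Proof. by []. Qed.
Definition eqEs := (eqE11, eqE12, eqE13, eqE21, eqE22, eqE23, eqE31, eqE32, eqE33).

Variable K : numClosedFieldType.
Local Notation x := ('X_e1 : {mpoly K[3]}).
Local Notation y := ('X_e2 : {mpoly K[3]}).
Local Notation z := ('X_e3 : {mpoly K[3]}).
Definition mk (c111 c112 c113 c122 c123 c133 c222 c223 c233 c333 : K) : {mpoly K[3]} :=
  c111%:MP * (x*x*x) + c112%:MP * (x*x*y) + c113%:MP * (x*x*z) + c122%:MP * (x*y*y)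
  + c123%:MP * (x*y*z) + c133%:MP * (x*z*z) + c222%:MP * (y*y*y) + c223%:MP * (y*y*z)
  + c233%:MP * (y*z*z) + c333%:MP * (z*z*z).
Definition sel (a b d : nat) (c111 c112 c113 c122 c123 c133 c222 c223 c233 c333 : K) : K :=
  c111 * [&& 3 == a, 0 == b & 0 == d]%:R +
  c112 * [&& 2 == a, 1 == b & 0 == d]%:R +
  c113 * [&& 2 == a, 0 == b & 1 == d]%:R +
  c122 * [&& 1 == a, 2 == b & 0 == d]%:R +
  c123 * [&& 1 == a, 1 == b & 1 == d]%:R +
  c133 * [&& 1 == a, 0 == b & 2 == d]%:R +
  c222 * [&& 0 == a, 3 == b & 0 == d]%:R +
  c223 * [&& 0 == a, 2 == b & 1 == d]%:R +
  c233 * [&& 0 == a, 1 == b & 2 == d]%:R +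
  c333 * [&& 0 == a, 0 == b & 3 == d]%:R.
Lemma sel300 c111 c112 c113 c122 c123 c133 c222 c223 c233 c333 : sel 3 0 0 c111 c112 c113 c122 c123 c133 c222 c223 c233 c333 = c111.
Proof. by rewrite /sel /= !(mulr0, mulr1, addr0, add0r). Qed.
Lemma sel210 c111 c112 c113 c122 c123 c133 c222 c223 c233 c333 : sel 2 1 0 c111 c112 c113 c122 c123 c133 c222 c223 c233 c333 = c112.
Proof. by rewrite /sel /= !(mulr0, mulr1, addr0, add0r). Qed.
Lemma sel201 c111 c112 c113 c122 c123 c133 c222 c223 c233 c333 : sel 2 0 1 c111 c112 c113 c122 c123 c133 c222 c223 c233 c333 = c113.
Proof. by rewrite /sel /= !(mulr0, mulr1, addr0, add0r). Qed.
Lemma sel120 c111 c112 c113 c122 c123 c133 c222 c223 c233 c333 : sel 1 2 0 c111 c112 c113 c122 c123 c133 c222 c223 c233 c333 = c122.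
Proof. by rewrite /sel /= !(mulr0, mulr1, addr0, add0r). Qed.
Lemma sel111 c111 c112 c113 c122 c123 c133 c222 c223 c233 c333 : sel 1 1 1 c111 c112 c113 c122 c123 c133 c222 c223 c233 c333 = c123.
Proof. by rewrite /sel /= !(mulr0, mulr1, addr0, add0r). Qed.
Lemma sel102 c111 c112 c113 c122 c123 c133 c222 c223 c233 c333 : sel 1 0 2 c111 c112 c113 c122 c123 c133 c222 c223 c233 c333 = c133.
Proof. by rewrite /sel /= !(mulr0, mulr1, addr0, add0r). Qed.
Lemma sel030 c111 c112 c113 c122 c123 c133 c222 c223 c233 c333 : sel 0 3 0 c111 c112 c113 c122 c123 c133 c222 c223 c233 c333 = c222.
Proof. by rewrite /sel /= !(mulr0, mulr1, addr0, add0r). Qed.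
Lemma sel021 c111 c112 c113 c122 c123 c133 c222 c223 c233 c333 : sel 0 2 1 c111 c112 c113 c122 c123 c133 c222 c223 c233 c333 = c223.
Proof. by rewrite /sel /= !(mulr0, mulr1, addr0, add0r). Qed.
Lemma sel012 c111 c112 c113 c122 c123 c133 c222 c223 c233 c333 : sel 0 1 2 c111 c112 c113 c122 c123 c133 c222 c223 c233 c333 = c233.
Proof. by rewrite /sel /= !(mulr0, mulr1, addr0, add0r). Qed.
Lemma sel003 c111 c112 c113 c122 c123 c133 c222 c223 c233 c333 : sel 0 0 3 c111 c112 c113 c122 c123 c133 c222 c223 c233 c333 = c333.
Proof. by rewrite /sel /= !(mulr0, mulr1, addr0, add0r). Qed.
Lemma sel0 a b d c111 c112 c113 c122 c123 c133 c222 c223 c233 c333 : (a + b + d != 3)%N -> sel a b d c111 c112 c113 c122 c123 c133 c222 c223 c233 c333 = 0.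
Proof.
move=> h; rewrite /sel.
have F : forall i j k : nat, (i + j + k == 3)%N -> [&& i == a, j == b & k == d] = false.
  move=> i j k hs; apply/negP => /and3P [/eqP e1' /eqP e2' /eqP e3'].
  by move: h; rewrite -e1' -e2' -e3' hs.
by rewrite !F // !(mulr0, addr0).
Qed.
Lemma mcoeff_mk c111 c112 c113 c122 c123 c133 c222 c223 c233 c333 m :
  (mk c111 c112 c113 c122 c123 c133 c222 c223 c233 c333)@_m = sel (m e1) (m e2) (m e3) c111 c112 c113 c122 c123 c133 c222 c223 c233 c333.
Proof.
by rewrite /mk /sel -!mpolyXD !mcoeffD !mcoeffCM !mcoeffX !mnm_eqE !mnmDE !mnm1E !eqEs.
Qed.
Lemma cf3_mk111 c111 c112 c113 c122 c123 c133 c222 c223 c233 c333 : cf3 (mk c111 c112 c113 c122 c123 c133 c222 c223 c233 c333) e1 e1 e1 = c111.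
Proof. by rewrite /cf3 !mcoeff_mk !mnmDE !mnm1E !eqEs /= ?sel300 ?sel210 ?sel201 ?sel120 ?sel111 ?sel102 ?sel030 ?sel021 ?sel012 ?sel003. Qed.
Lemma cf3_mk112 c111 c112 c113 c122 c123 c133 c222 c223 c233 c333 : cf3 (mk c111 c112 c113 c122 c123 c133 c222 c223 c233 c333) e1 e1 e2 = c112.
Proof. by rewrite /cf3 !mcoeff_mk !mnmDE !mnm1E !eqEs /= ?sel300 ?sel210 ?sel201 ?sel120 ?sel111 ?sel102 ?sel030 ?sel021 ?sel012 ?sel003. Qed.
Lemma cf3_mk113 c111 c112 c113 c122 c123 c133 c222 c223 c233 c333 : cf3 (mk c111 c112 c113 c122 c123 c133 c222 c223 c233 c333) e1 e1 e3 = c113.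
Proof. by rewrite /cf3 !mcoeff_mk !mnmDE !mnm1E !eqEs /= ?sel300 ?sel210 ?sel201 ?sel120 ?sel111 ?sel102 ?sel030 ?sel021 ?sel012 ?sel003. Qed.
Lemma cf3_mk122 c111 c112 c113 c122 c123 c133 c222 c223 c233 c333 : cf3 (mk c111 c112 c113 c122 c123 c133 c222 c223 c233 c333) e1 e2 e2 = c122.
Proof. by rewrite /cf3 !mcoeff_mk !mnmDE !mnm1E !eqEs /= ?sel300 ?sel210 ?sel201 ?sel120 ?sel111 ?sel102 ?sel030 ?sel021 ?sel012 ?sel003. Qed.
Lemma cf3_mk123 c111 c112 c113 c122 c123 c133 c222 c223 c233 c333 : cf3 (mk c111 c112 c113 c122 c123 c133 c222 c223 c233 c333) e1 e2 e3 = c123.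
Proof. by rewrite /cf3 !mcoeff_mk !mnmDE !mnm1E !eqEs /= ?sel300 ?sel210 ?sel201 ?sel120 ?sel111 ?sel102 ?sel030 ?sel021 ?sel012 ?sel003. Qed.
Lemma cf3_mk133 c111 c112 c113 c122 c123 c133 c222 c223 c233 c333 : cf3 (mk c111 c112 c113 c122 c123 c133 c222 c223 c233 c333) e1 e3 e3 = c133.
Proof. by rewrite /cf3 !mcoeff_mk !mnmDE !mnm1E !eqEs /= ?sel300 ?sel210 ?sel201 ?sel120 ?sel111 ?sel102 ?sel030 ?sel021 ?sel012 ?sel003. Qed.
Lemma cf3_mk222 c111 c112 c113 c122 c123 c133 c222 c223 c233 c333 : cf3 (mk c111 c112 c113 c122 c123 c133 c222 c223 c233 c333) e2 e2 e2 = c222.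
Proof. by rewrite /cf3 !mcoeff_mk !mnmDE !mnm1E !eqEs /= ?sel300 ?sel210 ?sel201 ?sel120 ?sel111 ?sel102 ?sel030 ?sel021 ?sel012 ?sel003. Qed.
Lemma cf3_mk223 c111 c112 c113 c122 c123 c133 c222 c223 c233 c333 : cf3 (mk c111 c112 c113 c122 c123 c133 c222 c223 c233 c333) e2 e2 e3 = c223.
Proof. by rewrite /cf3 !mcoeff_mk !mnmDE !mnm1E !eqEs /= ?sel300 ?sel210 ?sel201 ?sel120 ?sel111 ?sel102 ?sel030 ?sel021 ?sel012 ?sel003. Qed.
Lemma cf3_mk233 c111 c112 c113 c122 c123 c133 c222 c223 c233 c333 : cf3 (mk c111 c112 c113 c122 c123 c133 c222 c223 c233 c333) e2 e3 e3 = c233.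
Proof. by rewrite /cf3 !mcoeff_mk !mnmDE !mnm1E !eqEs /= ?sel300 ?sel210 ?sel201 ?sel120 ?sel111 ?sel102 ?sel030 ?sel021 ?sel012 ?sel003. Qed.
Lemma cf3_mk333 c111 c112 c113 c122 c123 c133 c222 c223 c233 c333 : cf3 (mk c111 c112 c113 c122 c123 c133 c222 c223 c233 c333) e3 e3 e3 = c333.
Proof. by rewrite /cf3 !mcoeff_mk !mnmDE !mnm1E !eqEs /= ?sel300 ?sel210 ?sel201 ?sel120 ?sel111 ?sel102 ?sel030 ?sel021 ?sel012 ?sel003. Qed.
Arguments cf3 : simpl never.
Arguments mcoeff : simpl never.
Lemma br_false (m : 'X_{1..3}) (i j k : nat) :
  (m e1 + m e2 + m e3)%N != 3%N -> (i + j + k)%N == 3%N ->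
  [&& i == m e1, j == m e2 & k == m e3] = false.
Proof.
move=> h hs; apply/negP => /and3P [/eqP e1' /eqP e2' /eqP e3'].
by move: h; rewrite -e1' -e2' -e3' hs.
Qed.
Lemma homog_mk (f : {mpoly K[3]}) : f \is 3.-homog ->
  f = mk (cf3 f e1 e1 e1) (cf3 f e1 e1 e2) (cf3 f e1 e1 e3) (cf3 f e1 e2 e2)
         (cf3 f e1 e2 e3) (cf3 f e1 e3 e3) (cf3 f e2 e2 e2) (cf3 f e2 e2 e3)
         (cf3 f e2 e3 e3) (cf3 f e3 e3 e3).
Proof.
move=> hf; apply/mpolyP => m; rewrite mcoeff_mk.
case: (boolP ((m e1 + m e2 + m e3)%N == 3%N)) => hs; last first.
  rewrite (dhomog_nemf_coeff hf); last by rewrite -mdeg3 in hs.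
  by rewrite sel0.
have hmon : forall i j k : 'I_3, [&& (U_(i) + U_(j) + U_(k))%MM e1 == m e1,
    (U_(i) + U_(j) + U_(k))%MM e2 == m e2 & (U_(i) + U_(j) + U_(k))%MM e3 == m e3] -> f@_m = cf3 f i j k.
  by move=> i j k h; rewrite /cf3; have /eqP -> : (U_(i) + U_(j) + U_(k))%MM == m by rewrite mnm_eqE.
move eqa : (m e1) hs => a; move eqb : (m e2) => b; move eqd : (m e3) => d hs.
case: a eqa hs => [|[|[|[|a]]]] eqa hs; case: b eqb hs => [|[|[|[|b]]]] eqb hs;
  case: d eqd hs => [|[|[|[|d]]]] eqd hs; simpl in hs; try discriminate hs.
all: rewrite ?sel300 ?sel210 ?sel201 ?sel120 ?sel111 ?sel102 ?sel030 ?sel021 ?sel012 ?sel003.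
all: by apply: hmon; rewrite !mnmDE !mnm1E eqa eqb eqd !eqEs.
Qed.
Lemma mderivU (i j : 'I_3) : ('X_j : {mpoly K[3]})^`M(i) = (j == i)%:R%:MP.
Proof.
rewrite mderivX mnm1E; case: eqP => [->|_]; last by rewrite scale0r.
have -> : (U_(i) - U_(i) = 0)%MM by rewrite -[X in (X - _)%MM]add0m addmK.
by rewrite mpolyX0 scale1r.
Qed.
Lemma mderiv1 (i : 'I_3) : (1 : {mpoly K[3]})^`M(i) = 0.
Proof. by rewrite -mpolyC1 mderivC. Qed.
Lemma d11 c111 c112 c113 c122 c123 c133 c222 c223 c233 c333 :
  (mk c111 c112 c113 c122 c123 c133 c222 c223 c233 c333)^`M(e1)^`M(e1) = (6%:R*c111)%:MP * x + (2%:R*c112)%:MP * y + (2%:R*c113)%:MP * z.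
Proof.
rewrite /mk !(mderivD, mderiv_mulC, mderivM, mderivU, mderiv0, mderiv1, mderivC) !eqEs /= !(mpolyC0, mpolyC1, mul0r, mulr0, mul1r, mulr1, add0r, addr0).
ring.
Qed.
Lemma d12 c111 c112 c113 c122 c123 c133 c222 c223 c233 c333 :
  (mk c111 c112 c113 c122 c123 c133 c222 c223 c233 c333)^`M(e2)^`M(e1) = (2%:R*c112)%:MP * x + (2%:R*c122)%:MP * y + (c123)%:MP * z.
Proof.
rewrite /mk !(mderivD, mderiv_mulC, mderivM, mderivU, mderiv0, mderiv1, mderivC) !eqEs /= !(mpolyC0, mpolyC1, mul0r, mulr0, mul1r, mulr1, add0r, addr0).
ring.
Qed.
Lemma d13 c111 c112 c113 c122 c123 c133 c222 c223 c233 c333 :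
  (mk c111 c112 c113 c122 c123 c133 c222 c223 c233 c333)^`M(e3)^`M(e1) = (2%:R*c113)%:MP * x + (c123)%:MP * y + (2%:R*c133)%:MP * z.
Proof.
rewrite /mk !(mderivD, mderiv_mulC, mderivM, mderivU, mderiv0, mderiv1, mderivC) !eqEs /= !(mpolyC0, mpolyC1, mul0r, mulr0, mul1r, mulr1, add0r, addr0).
ring.
Qed.
Lemma d22 c111 c112 c113 c122 c123 c133 c222 c223 c233 c333 :
  (mk c111 c112 c113 c122 c123 c133 c222 c223 c233 c333)^`M(e2)^`M(e2) = (2%:R*c122)%:MP * x + (6%:R*c222)%:MP * y + (2%:R*c223)%:MP * z.
Proof.
rewrite /mk !(mderivD, mderiv_mulC, mderivM, mderivU, mderiv0, mderiv1, mderivC) !eqEs /= !(mpolyC0, mpolyC1, mul0r, mulr0, mul1r, mulr1, add0r, addr0).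
ring.
Qed.
Lemma d23 c111 c112 c113 c122 c123 c133 c222 c223 c233 c333 :
  (mk c111 c112 c113 c122 c123 c133 c222 c223 c233 c333)^`M(e3)^`M(e2) = (c123)%:MP * x + (2%:R*c223)%:MP * y + (2%:R*c233)%:MP * z.
Proof.
rewrite /mk !(mderivD, mderiv_mulC, mderivM, mderivU, mderiv0, mderiv1, mderivC) !eqEs /= !(mpolyC0, mpolyC1, mul0r, mulr0, mul1r, mulr1, add0r, addr0).
ring.
Qed.
Lemma d33 c111 c112 c113 c122 c123 c133 c222 c223 c233 c333 :
  (mk c111 c112 c113 c122 c123 c133 c222 c223 c233 c333)^`M(e3)^`M(e3) = (2%:R*c133)%:MP * x + (2%:R*c233)%:MP * y + (6%:R*c333)%:MP * z.
Proof.
rewrite /mk !(mderivD, mderiv_mulC, mderivM, mderivU, mderiv0, mderiv1, mderivC) !eqEs /= !(mpolyC0, mpolyC1, mul0r, mulr0, mul1r, mulr1, add0r, addr0).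
ring.
Qed.
Lemma hess_mk c111 c112 c113 c122 c123 c133 c222 c223 c233 c333 :
  hessian (mk c111 c112 c113 c122 c123 c133 c222 c223 c233 c333) = mk (H111 c111 c112 c113 c122 c123 c133 c222 c223 c233 c333) (H112 c111 c112 c113 c122 c123 c133 c222 c223 c233 c333) (H113 c111 c112 c113 c122 c123 c133 c222 c223 c233 c333) (H122 c111 c112 c113 c122 c123 c133 c222 c223 c233 c333) (H123 c111 c112 c113 c122 c123 c133 c222 c223 c233 c333) (H133 c111 c112 c113 c122 c123 c133 c222 c223 c233 c333) (H222 c111 c112 c113 c122 c123 c133 c222 c223 c233 c333) (H223 c111 c112 c113 c122 c123 c133 c222 c223 c233 c333) (H233 c111 c112 c113 c122 c123 c133 c222 c223 c233 c333) (H333 c111 c112 c113 c122 c123 c133 c222 c223 c233 c333).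
Proof.
rewrite /hessian.
have two : (2%:R : K) != 0 by rewrite pnatr_eq0.
have -> : \det (hessmx (mk c111 c112 c113 c122 c123 c133 c222 c223 c233 c333)) = 2%:R * mk (H111 c111 c112 c113 c122 c123 c133 c222 c223 c233 c333) (H112 c111 c112 c113 c122 c123 c133 c222 c223 c233 c333) (H113 c111 c112 c113 c122 c123 c133 c222 c223 c233 c333) (H122 c111 c112 c113 c122 c123 c133 c222 c223 c233 c333) (H123 c111 c112 c113 c122 c123 c133 c222 c223 c233 c333) (H133 c111 c112 c113 c122 c123 c133 c222 c223 c233 c333) (H222 c111 c112 c113 c122 c123 c133 c222 c223 c233 c333) (H223 c111 c112 c113 c122 c123 c133 c222 c223 c233 c333) (H233 c111 c112 c113 c122 c123 c133 c222 c223 c233 c333) (H333 c111 c112 c113 c122 c123 c133 c222 c223 c233 c333).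
  rewrite det3 /hessmx !mxE.
  rewrite (mderiv_comm e1 e2) (mderiv_comm e1 e3) (mderiv_comm e2 e3) d11 d12 d13 d22 d23 d33.
  rewrite /mk /H111 /H112 /H113 /H122 /H123 /H133 /H222 /H223 /H233 /H333.
  ring.
by rewrite -mul_mpolyC mulrA -mpolyC_nat -rmorphM mulVf // mul1r.
Qed.

End MP.

Section MP2.
Variable K : numClosedFieldType.
Local Notation x := ('X_e1 : {mpoly K[3]}).
Local Notation y := ('X_e2 : {mpoly K[3]}).
Local Notation z := ('X_e3 : {mpoly K[3]}).
Definition lin (u1 u2 u3 : K) : {mpoly K[3]} := u1%:MP * x + u2%:MP * y + u3%:MP * z.

Lemma lin_homog (u1 u2 u3 : K) : lin u1 u2 u3 \is 1.-homog.
Proof.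
have hX : forall i : 'I_3, ('X_i : {mpoly K[3]}) \is 1.-homog.
  by move=> i; rewrite dhomogX /= mdeg1.
by rewrite /lin !mul_mpolyC; apply: rpredD; [apply: rpredD|]; apply: rpredZ; apply: hX.
Qed.

Lemma prod_lin (a1 b1 d1 a2 b2 d2 a3 b3 d3 : K) :
  lin a1 b1 d1 * lin a2 b2 d2 * lin a3 b3 d3 = mk (R111 a1 b1 d1 a2 b2 d2 a3 b3 d3) (R112 a1 b1 d1 a2 b2 d2 a3 b3 d3) (R113 a1 b1 d1 a2 b2 d2 a3 b3 d3) (R122 a1 b1 d1 a2 b2 d2 a3 b3 d3) (R123 a1 b1 d1 a2 b2 d2 a3 b3 d3) (R133 a1 b1 d1 a2 b2 d2 a3 b3 d3) (R222 a1 b1 d1 a2 b2 d2 a3 b3 d3) (R223 a1 b1 d1 a2 b2 d2 a3 b3 d3) (R233 a1 b1 d1 a2 b2 d2 a3 b3 d3) (R333 a1 b1 d1 a2 b2 d2 a3 b3 d3).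
Proof.
rewrite /lin /mk /R111 /R112 /R113 /R122 /R123 /R133 /R222 /R223 /R233 /R333.
ring.
Qed.

Lemma homog_lin (l : {mpoly K[3]}) : l \is 1.-homog ->
  l = lin l@_U_(e1) l@_U_(e2) l@_U_(e3).
Proof.
move=> hl; apply/mpolyP => m.
rewrite /lin !mcoeffD !mcoeffCM.
case: (boolP (mdeg m == 1%N)) => hm.
  case/mdeg1P: hm => i /eqP ->.
  rewrite !mcoeffX.
  case: i => [[|[|[|//]]] Hi].
  - have -> : Ordinal Hi = e1 by apply/val_inj.
    by rewrite !mnm_eqE !mnm1E !eqEs /= !(mulr0, mulr1, addr0, add0r).
  - have -> : Ordinal Hi = e2 by apply/val_inj.
    by rewrite !mnm_eqE !mnm1E !eqEs /= !(mulr0, mulr1, addr0, add0r).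
  - have -> : Ordinal Hi = e3 by apply/val_inj.
    by rewrite !mnm_eqE !mnm1E !eqEs /= !(mulr0, mulr1, addr0, add0r).
rewrite (dhomog_nemf_coeff hl) //.
have F : forall j : 'I_3, (U_(j) == m)%MM = false.
  move=> j; apply/negP => /eqP e; move: hm; by rewrite -e mdeg1.
by rewrite !mcoeffX !F !(mulr0, addr0).
Qed.

Lemma cf3_sub (a b : K) (p q : {mpoly K[3]}) i j k :
  cf3 (a *: p - b *: q) i j k = a * cf3 p i j k - b * cf3 q i j k.
Proof. by rewrite /cf3 mcoeffB !mcoeffZ. Qed.

Lemma main_gen (f : {mpoly K[3]}) :
  f \is 3.-homog ->
  cf3 f e3 e3 e3 != 0 ->
  let g := cf3 (hessian f) e3 e3 e3 *: f - cf3 f e3 e3 e3 *: hessian f in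
  (completely_reducible f <->
     [/\ cf3 g e1 e1 e3 = 0, cf3 g e1 e2 e3 = 0, cf3 g e2 e2 e3 = 0,
         cf3 g e1 e3 e3 = 0 & cf3 g e2 e3 e3 = 0])
  /\
  (4%:R * cf3 f e1 e1 e3 * cf3 f e2 e2 e3 - cf3 f e1 e2 e3 ^+ 2 != 0 ->
   (completely_reducible f <->
     [/\ cf3 g e1 e1 e3 = 0, cf3 g e1 e2 e3 = 0 & cf3 g e2 e2 e3 = 0])).
Proof.
move=> hf h3 g.
have ef := homog_mk hf.
set c111 := cf3 f e1 e1 e1 in ef h3 *.
set c112 := cf3 f e1 e1 e2 in ef h3 *.
set c113 := cf3 f e1 e1 e3 in ef h3 *.
set c122 := cf3 f e1 e2 e2 in ef h3 *.
set c123 := cf3 f e1 e2 e3 in ef h3 *.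
set c133 := cf3 f e1 e3 e3 in ef h3 *.
set c222 := cf3 f e2 e2 e2 in ef h3 *.
set c223 := cf3 f e2 e2 e3 in ef h3 *.
set c233 := cf3 f e2 e3 e3 in ef h3 *.
set c333 := cf3 f e3 e3 e3 in ef h3 *.
rewrite /g ef.
clearbody c111 c112 c113 c122 c123 c133 c222 c223 c233 c333.
clear ef hf g.
rewrite !cf3_sub hess_mk ?cf3_mk111 ?cf3_mk112 ?cf3_mk113 ?cf3_mk122 ?cf3_mk123 ?cf3_mk133 ?cf3_mk222 ?cf3_mk223 ?cf3_mk233 ?cf3_mk333.
have [p1 p2] := @main_scalar K c111 c112 c113 c122 c123 c133 c222 c223 c233 c333 h3.
have cr : completely_reducible (mk c111 c112 c113 c122 c123 c133 c222 c223 c233 c333) <-> redu c111 c112 c113 c122 c123 c133 c222 c223 c233 c333.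
  split.
    move=> [l1 [l2 [l3 [h1 h2 h3' e]]]].
    rewrite (homog_lin h1) (homog_lin h2) (homog_lin h3') prod_lin in e.
    exists l1@_U_(e1), l1@_U_(e2), l1@_U_(e3), l2@_U_(e1), l2@_U_(e2), l2@_U_(e3),
       l3@_U_(e1), l3@_U_(e2), l3@_U_(e3).
    have E := fun i j k => congr1 (fun p => cf3 p i j k) e.
    rewrite /= in E.
    rewrite /isprod; split; split.
    - by have := E e1 e1 e1; rewrite cf3_mk111 cf3_mk111.
    - by have := E e1 e1 e2; rewrite cf3_mk112 cf3_mk112.
    - by have := E e1 e1 e3; rewrite cf3_mk113 cf3_mk113.
    - by have := E e1 e2 e2; rewrite cf3_mk122 cf3_mk122.
    - by have := E e1 e2 e3; rewrite cf3_mk123 cf3_mk123.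
    - by have := E e1 e3 e3; rewrite cf3_mk133 cf3_mk133.
    - by have := E e2 e2 e2; rewrite cf3_mk222 cf3_mk222.
    - by have := E e2 e2 e3; rewrite cf3_mk223 cf3_mk223.
    - by have := E e2 e3 e3; rewrite cf3_mk233 cf3_mk233.
    - by have := E e3 e3 e3; rewrite cf3_mk333 cf3_mk333.

  move=> [a1 [b1 [d1 [a2 [b2 [d2 [a3 [b3 [d3 [[e111 e112 e113 e122 e123] [e133 e222 e223 e233 e333]]]]]]]]]]].
  exists (lin a1 b1 d1), (lin a2 b2 d2), (lin a3 b3 d3); split; try exact: lin_homog.
  by rewrite prod_lin -e111 -e112 -e113 -e122 -e123 -e133 -e222 -e223 -e233 -e333.
split.
  rewrite cr; exact: p1.
by move=> h4; rewrite cr; exact: p2.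
Qed.
End MP2.

Unset Implicit Arguments.
Theorem lemma10p1 (R : realType) (f : {mpoly R[i][3]}) :
  f \is 3.-homog ->
  cf3 f e3 e3 e3 != 0 ->
  let g := cf3 (hessian f) e3 e3 e3 *: f - cf3 f e3 e3 e3 *: hessian f in
  (completely_reducible f <->
     [/\ cf3 g e1 e1 e3 = 0, cf3 g e1 e2 e3 = 0, cf3 g e2 e2 e3 = 0,
         cf3 g e1 e3 e3 = 0 & cf3 g e2 e3 e3 = 0])
  /\
  (4%:R * cf3 f e1 e1 e3 * cf3 f e2 e2 e3 - cf3 f e1 e2 e3 ^+ 2 != 0 ->
   (completely_reducible f <->
     [/\ cf3 g e1 e1 e3 = 0, cf3 g e1 e2 e3 = 0 & cf3 g e2 e2 e3 = 0])).
Proof. exact: (@main_gen (R[i]) f). Qed.
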